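(* In the VI setting below, let $u\in\mathbb{R}^n$ and $y=S(u)$. Then $$\partial_BS(u)=\{A(\mathcal A_s\cup\mathcal B_0)^{-1}\chi(\mathcal A_s\cup\mathcal B_0):\ \mathcal B_0\subseteq\mathcal B\},$$ where $\mathcal A_s=\mathcal A_s(u)$ and $\mathcal B=\mathcal B(u)$.
   Context: VI setting: $A\in\mathbb{R}^{n\times n}$ symmetric positive definite, $\|v\|_1=\sum_i|v_i|$. For $u\in\mathbb{R}^n$, $S(u)=y$ is the unique solution of $\langle Ay,v-y\rangle+\|v\|_1-\|y\|_1\ge\langle u,v-y\rangle$ for all $v\in\mathbb{R}^n$; equivalently there is $q\in\mathbb{R}^n$ with $Ay+q=u$, $y_iq_i=|y_i|$, $|q_i|\le1$, and then $q=u-Ay$. $S$ is globally Lipschitz and directionally differentiable. Index sets (depending on $u$ through $y,q$): $\mathcal A_s(u)=\{i:|q_i|<1\}$ (strongly active), $\mathcal I(u)=\{i:y_i\ne0\}$ (inactive), $\mathcal B(u)=\{i:y_i=0,\ |q_i|=1\}$ (biactive). For $\mathcal N\subseteq\{1,\dots,n\}$: $A(\mathcal N)_{ij}=A_{ij}$ if $i,j\notin\mathcal N$, $A(\mathcal N)_{ij}=0$ if $i\ne j$ and ($i\in\mathcal N$ or $j\in\mathcal N$), $A(\mathcal N)_{ii}=1$ if $i\in\mathcal N$; $\chi(\mathcal N)$ is the diagonal matrix with $\chi(\mathcal N)_{ii}=1$ for $i\notin\mathcal N$ and $0$ otherwise ($A(\mathcal N)$ is invertible). $\partial_BS(u)$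 is the Bouligand subdifferential: all limits $\lim_jS'(u_j)$ with $u_j\to u$ and $S$ differentiable at $u_j$. *)

(* Defs.v *)
(* classical reals R.  Vectors of R^n are functions nat -> R,
   matrices are functions nat -> nat -> R; only indices < n are meaningful. *)
From Stdlib Require Import Reals Lra Lia Arith ClassicalEpsilon.
Open Scope R_scope.

Definition vec := nat -> R.
Definition mat := nat -> nat -> R.

Fixpoint rsum (n : nat) (f : nat -> R) : R :=
  match n with O => 0 | S k => rsum k f + f k end.

Definition inner (n : nat) (x y : vec) : R := rsum n (fun i => x i * y i).
Definition norm1 (n : nat) (x : vec) : R := rsum n (fun i => Rabs (x i)).
Definition mv (n : nat) (M : mat) (x : vec) : vec := fun i => rsum n (fun j => M i j * x j).
Definition mmul (n : nat) (M N : mat) : mat := fun i k => rsum n (fun j => M i j * N j k).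
Definition vsub (x y : vec) : vec := fun i => x i - y i.
Definition vadd (x y : vec) : vec := fun i => x i + y i.
Definition idm : mat := fun i j => if Nat.eqb i j then 1 else 0.

Definition meq (n : nat) (M N : mat) : Prop :=
  forall i j, (i < n)%nat -> (j < n)%nat -> M i j = N i j.

Definition symmetric (n : nat) (A : mat) : Prop :=
  forall i j, (i < n)%nat -> (j < n)%nat -> A i j = A j i.
Definition pos_def (n : nat) (A : mat) : Prop :=
  forall x : vec, (exists i, (i < n)%nat /\ x i <> 0) -> 0 < inner n x (mv n A x).
Definition spd (n : nat) (A : mat) : Prop := symmetric n A /\ pos_def n A.

Definition is_S (n : nat) (A : mat) (u y : vec) : Prop :=
  forall v : vec,
    inner n (mv n A y) (vsub v y) + norm1 n v - norm1 n y >= inner n u (vsub v y).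

(* the solution operator S (the solution exists and is unique on indices < n) *)
Definition Ssol (n : nat) (A : mat) (u : vec) : vec :=
  epsilon (inhabits (fun _ : nat => 0)) (fun y => is_S n A u y).

Definition minv (n : nat) (M : mat) : mat :=
  epsilon (inhabits (fun _ _ : nat => 0))
    (fun X => meq n (mmul n M X) idm /\ meq n (mmul n X M) idm).

Definition has_deriv (n : nat) (f : vec -> vec) (x : vec) (J : mat) : Prop :=
  forall eps, 0 < eps -> exists delta, 0 < delta /\
    forall h : vec, norm1 n h < delta ->
      norm1 n (vsub (vsub (f (vadd x h)) (f x)) (mv n J h)) <= eps * norm1 n h.

Definition vseq_cv (n : nat) (w : nat -> vec) (u : vec) : Prop :=
  forall eps, 0 < eps -> exists N, forall k, (N <= k)%nat -> norm1 n (vsub (w k) u) < eps.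

Definition mseq_cv (n : nat) (J : nat -> mat) (M : mat) : Prop :=
  forall i j, (i < n)%nat -> (j < n)%nat -> Un_cv (fun k => J k i j) (M i j).

Definition bouligand (n : nat) (A : mat) (u : vec) (M : mat) : Prop :=
  exists (w : nat -> vec) (J : nat -> mat),
    vseq_cv n w u /\ (forall k, has_deriv n (Ssol n A) (w k) (J k)) /\ mseq_cv n J M.

Definition qvec (n : nat) (A : mat) (u : vec) : vec := vsub u (mv n A (Ssol n A u)).
Definition strongly_active (n : nat) (A : mat) (u : vec) (i : nat) : bool :=
  if Rlt_dec (Rabs (qvec n A u i)) 1 then true else false.
Definition inactive (n : nat) (A : mat) (u : vec) (i : nat) : bool :=
  if Req_EM_T (Ssol n A u i) 0 then false else true.
Definition biactive (n : nat) (A : mat) (u : vec) (i : nat) : bool :=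
  if Req_EM_T (Ssol n A u i) 0 then
    (if Req_EM_T (Rabs (qvec n A u i)) 1 then true else false)
  else false.

Definition A_of (A : mat) (N : nat -> bool) : mat :=
  fun i j => if orb (N i) (N j) then (if Nat.eqb i j then 1 else 0) else A i j.
Definition chi (N : nat -> bool) : mat :=
  fun i j => if Nat.eqb i j then (if N i then 0 else 1) else 0.

(* Main.v *)
Require Import Defs.
From Stdlib Require Import Reals Lra Lia Arith ClassicalEpsilon Classical Bool.
Open Scope R_scope.

Lemma rsum_ext n f g : (forall i, (i < n)%nat -> f i = g i) -> rsum n f = rsum n g.
Proof. induction n; simpl; intros H; auto. rewrite IHn by (intros; apply H; lia). rewrite H by lia. auto. Qed.

Lemma rsum_plus n f g : rsum n (fun i => f i + g i) = rsum n f + rsum n g.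
Proof. induction n; simpl; [lra|]. rewrite IHn; lra. Qed.

Lemma rsum_minus n f g : rsum n (fun i => f i - g i) = rsum n f - rsum n g.
Proof. induction n; simpl; [lra|]. rewrite IHn; lra. Qed.

Lemma rsum_scal n c f : rsum n (fun i => c * f i) = c * rsum n f.
Proof. induction n; simpl; [lra|]. rewrite IHn; lra. Qed.

Lemma rsum_scal_r n c f : rsum n (fun i => f i * c) = rsum n f * c.
Proof. induction n; simpl; [lra|]. rewrite IHn; lra. Qed.

Lemma rsum_zero n f : (forall i, (i < n)%nat -> f i = 0) -> rsum n f = 0.
Proof. induction n; simpl; intros H; auto. rewrite IHn, H; try lra; try lia. intros; apply H; lia. Qed.

Lemma rsum_le n f g : (forall i, (i < n)%nat -> f i <= g i) -> rsum n f <= rsum n g.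
Proof. induction n; simpl; intros H; [lra|]. assert (f n <= g n) by (apply H; lia).
  assert (rsum n f <= rsum n g) by (apply IHn; intros; apply H; lia). lra. Qed.

Lemma rsum_nonneg n f : (forall i, (i < n)%nat -> 0 <= f i) -> 0 <= rsum n f.
Proof. intros H. replace 0 with (rsum n (fun _ => 0)). apply rsum_le; auto.
  apply rsum_zero; auto. Qed.

Lemma rsum_abs n f : Rabs (rsum n f) <= rsum n (fun i => Rabs (f i)).
Proof. induction n; simpl. rewrite Rabs_R0; lra.
  eapply Rle_trans. apply Rabs_triang. lra. Qed.

Lemma rsum_swap n m f : rsum n (fun i => rsum m (fun j => f i j)) = rsum m (fun j => rsum n (fun i => f i j)).
Proof. induction n; simpl. symmetry; apply rsum_zero; auto.
  rewrite IHn. rewrite <- rsum_plus. auto. Qed.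

Lemma rsum_elem n f i : (forall j, (j < n)%nat -> 0 <= f j) -> (i < n)%nat -> f i <= rsum n f.
Proof. induction n; intros H Hi; simpl; [lia|].
  assert (0 <= rsum n f) by (apply rsum_nonneg; intros; apply H; lia).
  destruct (Nat.eq_dec i n). subst. lra.
  assert (f i <= rsum n f) by (apply IHn; [intros; apply H|]; lia).
  assert (0 <= f n) by (apply H; lia). lra. Qed.

Lemma rsum_delta n f j : (j < n)%nat -> rsum n (fun l => if Nat.eqb l j then f l else 0) = f j.
Proof. induction n; intros Hj; simpl; [lia|].
  destruct (Nat.eq_dec j n).
  - subst. rewrite Nat.eqb_refl. rewrite rsum_zero. lra.
    intros i Hi. destruct (Nat.eqb_spec i n); [lia|auto].
  - rewrite IHn by lia. destruct (Nat.eqb_spec n j); [lia|lra]. Qed.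

Lemma rsum_change n f g i : (i < n)%nat -> (forall j, (j < n)%nat -> j <> i -> f j = g j) ->
  rsum n g = rsum n f + (g i - f i).
Proof. induction n; intros Hi H; simpl; [lia|].
  destruct (Nat.eq_dec i n).
  - subst. rewrite (rsum_ext n g f). lra. intros; symmetry; apply H; lia.
  - rewrite (IHn) by (try lia; intros; apply H; lia). rewrite (H n) by lia. lra. Qed.

Lemma rsum_S n f : rsum (S n) f = rsum n f + f n.
Proof. reflexivity. Qed.

Lemma cauchy_schwarz n a b :
  (rsum n (fun i => a i * b i))^2 <= rsum n (fun i => a i ^ 2) * rsum n (fun i => b i ^ 2).
Proof.
  set (A := rsum n (fun i => a i ^ 2)). set (B := rsum n (fun i => b i ^ 2)).
  set (C := rsum n (fun i => a i * b i)).
  assert (Hq : forall t, 0 <= A * t^2 + 2 * C * t + B).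
  { intros t. assert (E: A * t ^ 2 + 2 * C * t + B = rsum n (fun i => (a i * t + b i)^2)).
    { unfold A, B, C. rewrite <- rsum_scal_r. rewrite <- rsum_scal, <- rsum_scal_r.
      rewrite <- !rsum_plus. apply rsum_ext; intros; ring. }
    rewrite E. apply rsum_nonneg; intros; apply pow2_ge_0. }
  assert (HA : 0 <= A) by (apply rsum_nonneg; intros; apply pow2_ge_0).
  destruct (Req_dec A 0) as [H0|H0].
  - assert (C = 0).
    { destruct (Req_dec C 0); auto. exfalso.
      specialize (Hq (- (B + 1) / (2 * C))). rewrite H0 in Hq.
      replace (0 * (- (B + 1) / (2 * C)) ^ 2 + 2 * C * (- (B + 1) / (2 * C)) + B) with (-1) in Hq by (field; auto). lra. }
    rewrite H, H0. nra.
  - specialize (Hq (- C / A)).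
    replace (A * (- C / A) ^ 2 + 2 * C * (- C / A) + B) with ((A * B - C^2) / A) in Hq by (field; auto).
    assert (0 <= A * B - C^2).
    { apply Rmult_le_reg_r with (/ A). apply Rinv_0_lt_compat; lra. rewrite Rmult_0_l. apply Hq. }
    lra.
Qed.

Lemma Un_cv_const a : Un_cv (fun _ => a) a.
Proof. intros e He. exists 0%nat. intros. unfold R_dist. rewrite Rminus_diag, Rabs_R0; auto. Qed.

Lemma rsum_cv n (f : nat -> nat -> R) (l : nat -> R) :
  (forall i, (i < n)%nat -> Un_cv (fun k => f k i) (l i)) -> Un_cv (fun k => rsum n (f k)) (rsum n l).
Proof. induction n; intros H; simpl. apply Un_cv_const.
  apply CV_plus. apply IHn; intros; apply H; lia. apply H; lia. Qed.

Lemma finite_min n (f : nat -> R) : (forall i, (i < n)%nat -> 0 < f i) ->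
  exists m, 0 < m /\ forall i, (i < n)%nat -> m <= f i.
Proof. induction n; intros H. exists 1; split; [lra|intros; lia].
  destruct IHn as [m [Hm Hm2]]. intros; apply H; lia.
  exists (Rmin m (f n)). split. apply Rmin_glb_lt; [auto|apply H; lia].
  clear H. intros i Hi. destruct (Nat.eq_dec i n). subst; apply Rmin_r.
  eapply Rle_trans. apply Rmin_l. apply Hm2; lia. Qed.

Lemma finite_max n (f : nat -> R) : exists C, 0 < C /\ forall i, (i < n)%nat -> f i <= C.
Proof. induction n. exists 1; split; [lra|intros; lia].
  destruct IHn as [m [Hm Hm2]].
  exists (Rmax m (f n)). split. eapply Rlt_le_trans; [apply Hm|apply Rmax_l].
  intros i Hi. destruct (Nat.eq_dec i n). subst; apply Rmax_r.
  eapply Rle_trans. apply Hm2; lia. apply Rmax_l. Qed.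

Lemma mv_ext n P x y i : (forall j, (j < n)%nat -> x j = y j) -> mv n P x i = mv n P y i.
Proof. intros H; unfold mv; apply rsum_ext; intros; rewrite H; auto. Qed.

Lemma mv_plus n P x y i : mv n P (vadd x y) i = mv n P x i + mv n P y i.
Proof. unfold mv, vadd. rewrite <- rsum_plus. apply rsum_ext; intros; ring. Qed.

Lemma mv_minus n P x y i : mv n P (vsub x y) i = mv n P x i - mv n P y i.
Proof. unfold mv, vsub. rewrite <- rsum_minus. apply rsum_ext; intros; ring. Qed.

Lemma mv_scal n P c x i : mv n P (fun l => c * x l) i = c * mv n P x i.
Proof. unfold mv. rewrite <- rsum_scal. apply rsum_ext; intros; ring. Qed.

Lemma mv_mv n P Q x i : mv n P (mv n Q x) i = mv n (mmul n P Q) x i.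
Proof. unfold mv, mmul.
  transitivity (rsum n (fun k => rsum n (fun j => P i k * Q k j * x j))).
  apply rsum_ext; intros. rewrite <- rsum_scal. apply rsum_ext; intros; ring.
  rewrite rsum_swap. apply rsum_ext; intros. rewrite <- rsum_scal_r. auto. Qed.

Lemma mmul_assoc n P Q T i j : mmul n (mmul n P Q) T i j = mmul n P (mmul n Q T) i j.
Proof. unfold mmul.
  transitivity (rsum n (fun k => rsum n (fun l => P i l * Q l k * T k j))).
  apply rsum_ext; intros. rewrite <- rsum_scal_r. auto.
  rewrite rsum_swap. apply rsum_ext; intros. rewrite <- rsum_scal. apply rsum_ext; intros; ring. Qed.

Definition ev (j : nat) (t : R) : vec := fun l => if Nat.eqb l j then t else 0.

Lemma mv_ev n P j t i : (j < n)%nat -> mv n P (ev j t) i = t * P i j.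
Proof. intros Hj. unfold mv, ev.
  rewrite (rsum_ext n _ (fun l => if Nat.eqb l j then P i l * t else 0)).
  rewrite rsum_delta; auto; ring.
  intros l _. destruct (Nat.eqb l j); ring. Qed.

Lemma norm1_nonneg n x : 0 <= norm1 n x.
Proof. unfold norm1; apply rsum_nonneg; intros; apply Rabs_pos. Qed.

Lemma norm1_ev n j t : (j < n)%nat -> norm1 n (ev j t) = Rabs t.
Proof. intros Hj. unfold norm1, ev.
  rewrite (rsum_ext n _ (fun l => if Nat.eqb l j then Rabs t else 0)).
  apply rsum_delta; auto.
  intros l _. destruct (Nat.eqb l j); auto. apply Rabs_R0. Qed.

Lemma coord_le_norm1 n x i : (i < n)%nat -> Rabs (x i) <= norm1 n x.
Proof. intros Hi. unfold norm1. apply (rsum_elem n (fun i => Rabs (x i))); auto.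
  intros; apply Rabs_pos. Qed.

Lemma mv_bound n P h i : Rabs (mv n P h i) <= rsum n (fun j => Rabs (P i j)) * norm1 n h.
Proof. unfold mv. eapply Rle_trans. apply rsum_abs.
  unfold norm1. rewrite <- rsum_scal.
  apply rsum_le. intros j Hj. rewrite Rabs_mult.
  apply Rmult_le_compat_r. apply Rabs_pos.
  apply (rsum_elem n (fun j => Rabs (P i j))); auto. intros; apply Rabs_pos. Qed.

Lemma norm1_bound n x a : (forall i, (i < n)%nat -> Rabs (x i) <= a) -> norm1 n x <= INR n * a.
Proof. intros H. unfold norm1. induction n. simpl. lra.
  rewrite rsum_S, S_INR. assert (Rabs (x n) <= a) by (apply H; lia).
  assert (rsum n (fun i => Rabs (x i)) <= INR n * a) by (apply IHn; intros; apply H; lia). lra. Qed.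

Lemma inner_nonneg n x : 0 <= inner n x x.
Proof. unfold inner. apply rsum_nonneg; intros. apply Rle_0_sqr. Qed.

Lemma coord_sq_le_inner n x i : (i < n)%nat -> x i * x i <= inner n x x.
Proof. intros Hi. unfold inner. apply (rsum_elem n (fun i => x i * x i)); auto. intros; apply Rle_0_sqr. Qed.

Lemma inner_le_norm1_sq n x : inner n x x <= norm1 n x * norm1 n x.
Proof. unfold inner, norm1. induction n; simpl. lra.
  assert (0 <= rsum n (fun i => Rabs (x i))) by (apply rsum_nonneg; intros; apply Rabs_pos).
  assert (x n * x n = Rabs (x n) * Rabs (x n)) by (rewrite <- Rabs_mult; rewrite Rabs_right; [auto|apply Rle_ge, Rle_0_sqr]).
  pose proof (Rabs_pos (x n)). nra. Qed.

Definition schur (n : nat) (A : mat) : mat := fun i j => A i j - A i n * A n j / A n n.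

Lemma schur_id n A x : symmetric (S n) A -> A n n <> 0 ->
  inner (S n) x (mv (S n) A x) =
  inner n x (mv n (schur n A) x) + A n n * (x n + rsum n (fun j => A n j * x j) / A n n)^2.
Proof.
  intros Hs Ha.
  set (P := rsum n (fun j => A n j * x j)).
  set (Qn := rsum n (fun i => x i * rsum n (fun j => A i j * x j))).
  assert (HQs : rsum n (fun i => x i * A i n) = P).
  { unfold P. apply rsum_ext. intros i Hi. rewrite (Hs i n) by lia. ring. }
  assert (E1 : inner (S n) x (mv (S n) A x) = Qn + x n * rsum n (fun i => x i * A i n) + x n * (P + A n n * x n)).
  { unfold inner, mv. rewrite rsum_S.
    rewrite (rsum_ext n _ (fun i => x i * rsum n (fun j => A i j * x j) + x n * (x i * A i n))).
    rewrite rsum_plus, (rsum_scal n (x n) (fun i => x i * A i n)).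
    rewrite (rsum_S n (fun j => A n j * x j)). fold P. unfold Qn. ring.
    intros i Hi. simpl. ring. }
  assert (E2 : inner n x (mv n (schur n A) x) = Qn - rsum n (fun i => x i * A i n) * (P / A n n)).
  { unfold inner, mv, schur.
    rewrite (rsum_ext n _ (fun i => x i * rsum n (fun j => A i j * x j) - x i * A i n * (P / A n n))).
    rewrite rsum_minus, rsum_scal_r. auto.
    intros i Hi. rewrite (rsum_ext n _ (fun j => A i j * x j - (A i n / A n n) * (A n j * x j))).
    rewrite rsum_minus, rsum_scal. fold P. field; auto.
    intros; field; auto. }
  rewrite E1, E2, HQs. field; auto.
Qed.

Lemma inner_ev n A j : (j < n)%nat -> inner n (ev j 1) (mv n A (ev j 1)) = A j j.
Proof. intros Hj. unfold inner.
  rewrite (rsum_ext n _ (fun i => if Nat.eqb i j then A i j else 0)).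
  apply (rsum_delta n (fun i => A i j) j); auto.
  intros i Hi. rewrite mv_ev by auto. unfold ev. destruct (Nat.eqb i j); ring. Qed.

Lemma coercive n : forall A, spd n A -> exists c, 0 < c /\ forall x, c * inner n x x <= inner n x (mv n A x).
Proof.
  induction n as [|n IH]; intros A [Hs Hp].
  { exists 1. split. lra. intros x. unfold inner. simpl. lra. }
  set (a := A n n).
  assert (Ha : 0 < a).
  { unfold a. rewrite <- (inner_ev (S n) A n) by lia. apply Hp. exists n. split. lia. unfold ev. rewrite Nat.eqb_refl. lra. }
  assert (HS : spd n (schur n A)).
  { split.
    - intros i j Hi Hj. unfold schur. rewrite (Hs i j), (Hs i n), (Hs n j) by lia. field. unfold a in Ha; lra.
    - intros x [i [Hi Hx]].
      set (b := rsum n (fun j => A n j * x j) / A n n).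
      set (x' := fun k => if Nat.eqb k n then - b else x k).
      assert (Ex : forall k, (k < n)%nat -> x' k = x k).
      { intros k Hk. unfold x'. destruct (Nat.eqb_spec k n); [lia|auto]. }
      assert (Hpos : 0 < inner (S n) x' (mv (S n) A x')).
      { apply Hp. exists i. split. lia. rewrite Ex; auto. }
      rewrite schur_id in Hpos; auto; [|fold a; lra].
      assert (E3 : inner n x' (mv n (schur n A) x') = inner n x (mv n (schur n A) x)).
      { unfold inner. apply rsum_ext; intros k Hk. rewrite Ex by auto. f_equal. apply mv_ext. auto. }
      assert (E4 : rsum n (fun j => A n j * x' j) = rsum n (fun j => A n j * x j)).
      { apply rsum_ext; intros k Hk. rewrite Ex; auto. }
      rewrite E3, E4 in Hpos. fold b in Hpos.
      assert (x' n = - b) by (unfold x'; rewrite Nat.eqb_refl; auto).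
      rewrite H in Hpos. replace (- b + b) with 0 in Hpos by ring. rewrite pow_i in Hpos by lia. lra. }
  destruct (IH _ HS) as [c' [Hc' Hc'2]].
  set (L := rsum n (fun j => A n j ^ 2) / (a * a)).
  assert (HL : 0 <= L).
  { unfold L. apply Rmult_le_pos. apply rsum_nonneg; intros; apply pow2_ge_0.
    apply Rlt_le, Rinv_0_lt_compat. nra. }
  set (c := Rmin (c' / (1 + 2 * L)) (a / 2)).
  assert (Hc : 0 < c). { unfold c. apply Rmin_glb_lt. apply Rdiv_lt_0_compat; lra. lra. }
  exists c. split; auto.
  intros x. rewrite schur_id; auto; [|fold a; lra]. fold a.
  set (X := inner n x x).
  set (b := rsum n (fun j => A n j * x j) / a).
  assert (HX : 0 <= X) by apply inner_nonneg.
  assert (Hb : b * b <= L * X).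
  { unfold b, L, X. pose proof (cauchy_schwarz n (fun j => A n j) x) as CS.
    unfold inner.
    replace (rsum n (fun i => x i * x i)) with (rsum n (fun i => x i ^ 2)) by (apply rsum_ext; intros; ring).
    set (P := rsum n (fun j => A n j * x j)) in *.
    set (S1 := rsum n (fun j => A n j ^ 2)) in *.
    set (S2 := rsum n (fun j => x j ^ 2)) in *.
    replace (P / a * (P / a)) with (P ^ 2 / (a * a)) by (field; lra).
    replace (S1 / (a * a) * S2) with ((S1 * S2) / (a * a)) by (field; lra).
    apply Rmult_le_compat_r. apply Rlt_le, Rinv_0_lt_compat. nra. auto. }
  assert (EX : inner (S n) x x = X + x n * x n) by (unfold inner, X; simpl; auto).
  rewrite EX.
  pose proof (Hc'2 x) as Hq. fold X in Hq.
  assert (Hc1 : c * (1 + 2 * L) <= c').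
  { unfold c. eapply Rle_trans. apply Rmult_le_compat_r. lra. apply Rmin_l.
    right. field. lra. }
  assert (Hc2 : 2 * c <= a). { unfold c. pose proof (Rmin_r (c' / (1 + 2 * L)) (a / 2)). lra. }
  assert (Hxn : x n * x n <= 2 * (x n + b) ^ 2 + 2 * (b * b)).
  { assert (0 <= (x n + 2 * b) ^ 2) by apply pow2_ge_0. nra. }
  assert (c * (X + x n * x n) <= c * (1 + 2 * L) * X + 2 * c * (x n + b) ^ 2).
  { assert (c * (x n * x n) <= c * (2 * (x n + b) ^ 2 + 2 * (b * b))) by (apply Rmult_le_compat_l; lra).
    assert (c * (b * b) <= c * (L * X)) by (apply Rmult_le_compat_l; lra). nra. }
  assert (c * (1 + 2 * L) * X <= c' * X) by (apply Rmult_le_compat_r; lra).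
  assert (2 * c * (x n + b) ^ 2 <= a * (x n + b) ^ 2) by (apply Rmult_le_compat_r; [apply pow2_ge_0|lra]).
  lra.
Qed.

Fixpoint iterv (T : vec -> vec) (k : nat) : vec :=
  match k with O => (fun _ => 0) | S k => T (iterv T k) end.

Lemma Av_sq_bound n A d :
  inner n (mv n A d) (mv n A d) <= rsum n (fun i => rsum n (fun j => A i j ^ 2)) * inner n d d.
Proof. unfold inner. rewrite <- rsum_scal_r. apply rsum_le. intros i Hi.
  pose proof (cauchy_schwarz n (fun j => A i j) d) as CS. unfold mv.
  replace (rsum n (fun j => d j * d j)) with (rsum n (fun j => d j ^ 2)) by (apply rsum_ext; intros; ring).
  simpl in CS. replace (rsum n (fun j => A i j * d j) * rsum n (fun j => A i j * d j)) with
    ((rsum n (fun j => A i j * d j))^2) by ring. auto.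
Qed.

Lemma cv_shift (Y : nat -> R) l : Un_cv Y l -> Un_cv (fun k => Y (S k)) l.
Proof. intros H e He. destruct (H e He) as [N HN]. exists N. intros k Hk. apply HN. lia. Qed.

Lemma cv_lip (a : nat -> R) (b : nat -> R) la lb :
  Un_cv a la -> (forall k, Rabs (b k - lb) <= Rabs (a k - la)) -> Un_cv b lb.
Proof. intros H Hb e He. destruct (H e He) as [N HN]. exists N. intros k Hk.
  unfold R_dist in *. eapply Rle_lt_trans. apply Hb. apply HN; auto. Qed.

Lemma geom_cauchy (Y : nat -> R) s E :
  0 <= s < 1 -> 0 <= E -> (forall k, Rabs (Y (S k) - Y k) <= E * s ^ k) -> Cauchy_crit Y.
Proof.
  intros Hs HE H.
  assert (Hm : forall k m, Rabs (Y (k + m)%nat - Y k) <= E * (s ^ k - s ^ (k + m)) / (1 - s)).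
  { intros k m. induction m.
    - rewrite Nat.add_0_r. unfold Rminus. rewrite Rplus_opp_r, Rabs_R0.
      replace (E * (s ^ k + - s ^ k) / (1 + - s)) with 0 by (field; lra). lra.
    - replace (k + S m)%nat with (S (k + m)) by lia.
      replace (Y (S (k + m)) - Y k) with ((Y (S (k + m)) - Y (k + m)%nat) + (Y (k + m)%nat - Y k)) by ring.
      eapply Rle_trans. apply Rabs_triang.
      replace (E * (s ^ k - s ^ S (k + m)) / (1 - s)) with
        (E * s ^ (k + m) + E * (s ^ k - s ^ (k + m)) / (1 - s)) by (simpl; field; lra).
      pose proof (H (k + m)%nat). lra. }
  assert (Hm2 : forall k m, (k <= m)%nat -> Rabs (Y m - Y k) <= E * s ^ k / (1 - s)).
  { intros k m Hkm. replace m with (k + (m - k))%nat by lia. eapply Rle_trans. apply Hm.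
    unfold Rdiv. apply Rmult_le_compat_r. apply Rlt_le, Rinv_0_lt_compat; lra.
    apply Rmult_le_compat_l; auto. pose proof (pow_le s (k + (m - k)) (proj1 Hs)). lra. }
  intros eps Heps.
  assert (Hr : Rabs s < 1) by (rewrite Rabs_right; lra).
  destruct (pow_lt_1_zero s Hr (eps * (1 - s) / (2 * (E + 1)))) as [N HN].
  { apply Rdiv_lt_0_compat; [apply Rmult_lt_0_compat|]; lra. }
  exists N. intros a b Ha Hb. unfold R_dist.
  specialize (HN N (Nat.le_refl N)). rewrite Rabs_right in HN by (apply Rle_ge, pow_le; lra).
  replace (Y a - Y b) with ((Y a - Y N) - (Y b - Y N)) by ring.
  eapply Rle_lt_trans. apply Rabs_triang. rewrite Rabs_Ropp.
  pose proof (Hm2 N a Ha). pose proof (Hm2 N b Hb).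
  assert (E * s ^ N / (1 - s) < eps / 2).
  { apply Rmult_lt_reg_r with ((1 - s)). lra.
    replace (E * s ^ N / (1 - s) * (1 - s)) with (E * s ^ N) by (field; lra).
    pose proof (pow_le s N (proj1 Hs)).
    assert (E * s ^ N <= (E + 1) * s ^ N) by nra.
    assert (Hz3 : (E + 1) * s ^ N < (E + 1) * (eps * (1 - s) / (2 * (E + 1)))) by (apply Rmult_lt_compat_l; lra).
    replace ((E + 1) * (eps * (1 - s) / (2 * (E + 1)))) with (eps / 2 * (1 - s)) in Hz3 by (field; lra).
    lra. }
  lra.
Qed.

Lemma fixed_point n A : spd n A -> exists tau, 0 < tau /\
  forall (u : vec) (p : nat -> R -> R), (forall i a b, Rabs (p i a - p i b) <= Rabs (a - b)) ->
  exists y : vec, forall i, (i < n)%nat -> y i = p i (y i - tau * (mv n A y i - u i)).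
Proof.
  intros hA. destruct (coercive n A hA) as [c [Hc Hco]].
  set (L := rsum n (fun i => rsum n (fun j => A i j ^ 2)) + 1).
  assert (HL0 : 0 <= rsum n (fun i => rsum n (fun j => A i j ^ 2))).
  { apply rsum_nonneg; intros; apply rsum_nonneg; intros; apply pow2_ge_0. }
  assert (HL : 0 < L) by (unfold L; lra).
  exists (c / L). split. apply Rdiv_lt_0_compat; lra.
  intros u p Hp.
  set (tau := c / L).
  set (T := fun y : vec => fun i => p i (y i - tau * (mv n A y i - u i))).
  set (r := Rmax 0 (1 - c * c / L)).
  assert (Hr0 : 0 <= r) by apply Rmax_l.
  assert (Hr1 : r < 1).
  { unfold r. apply Rmax_lub_lt. lra. assert (0 < c * c / L) by (apply Rdiv_lt_0_compat; nra). lra. }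
  assert (Hcon : forall y z, inner n (vsub (T y) (T z)) (vsub (T y) (T z)) <= r * inner n (vsub y z) (vsub y z)).
  { intros y z. set (d := vsub y z).
    assert (Hd : forall i, (i < n)%nat -> vsub (T y) (T z) i * vsub (T y) (T z) i <= (d i - tau * mv n A d i)^2).
    { intros i Hi. unfold vsub at 1 2. unfold T.
      pose proof (Hp i (y i - tau * (mv n A y i - u i)) (z i - tau * (mv n A z i - u i))) as H1.
      replace (y i - tau * (mv n A y i - u i) - (z i - tau * (mv n A z i - u i))) with (d i - tau * mv n A d i) in H1.
      2:{ unfold d. rewrite mv_minus. unfold vsub. ring. }
      set (a := p i (y i - tau * (mv n A y i - u i)) - p i (z i - tau * (mv n A z i - u i))) in *.
      set (b := d i - tau * mv n A d i) in *.
      apply Rsqr_le_abs_1 in H1. unfold Rsqr in H1. simpl. lra. }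
    eapply Rle_trans. unfold inner at 1. apply rsum_le. apply Hd.
    set (X := inner n d d).
    assert (E1 : rsum n (fun i => (d i - tau * mv n A d i) ^ 2) =
      X - 2 * tau * inner n d (mv n A d) + tau * tau * inner n (mv n A d) (mv n A d)).
    { unfold X, inner. rewrite <- rsum_scal, <- rsum_scal. rewrite <- rsum_minus, <- rsum_plus.
      apply rsum_ext; intros; ring. }
    rewrite E1. pose proof (Hco d) as H1. fold X in H1.
    pose proof (Av_sq_bound n A d) as H2. fold X in H2.
    assert (HX : 0 <= X) by apply inner_nonneg.
    assert (inner n (mv n A d) (mv n A d) <= L * X) by (unfold L; nra).
    assert (Ht : 0 < tau) by (unfold tau; apply Rdiv_lt_0_compat; lra).
    assert (X - 2 * tau * inner n d (mv n A d) + tau * tau * inner n (mv n A d) (mv n A d)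
            <= X - 2 * tau * (c * X) + tau * tau * (L * X)).
    { assert (tau * tau * inner n (mv n A d) (mv n A d) <= tau * tau * (L * X)) by (apply Rmult_le_compat_l; nra).
      assert (tau * (c * X) <= tau * inner n d (mv n A d)) by (apply Rmult_le_compat_l; lra). lra. }
    assert (X - 2 * tau * (c * X) + tau * tau * (L * X) = (1 - c * c / L) * X) by (unfold tau; field; lra).
    assert ((1 - c * c / L) * X <= r * X) by (apply Rmult_le_compat_r; [auto|apply Rmax_r]).
    lra. }
  set (Y := iterv T).
  set (D0 := inner n (vsub (Y 1%nat) (Y 0%nat)) (vsub (Y 1%nat) (Y 0%nat))).
  assert (HD : forall k, inner n (vsub (Y (S k)) (Y k)) (vsub (Y (S k)) (Y k)) <= r ^ k * D0).
  { induction k. simpl. fold D0. lra.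
    change (Y (S (S k))) with (T (Y (S k))). change (Y (S k)) with (T (Y k)) at 2.
    eapply Rle_trans. apply Hcon. change (T (Y k)) with (Y (S k)). simpl. nra. }
  set (s := (1 + r) / 2).
  assert (Hs : 0 <= s < 1) by (unfold s; lra).
  assert (Hsr : r <= s * s) by (unfold s; nra).
  set (E := D0 + 1).
  assert (HD0 : 0 <= D0) by apply inner_nonneg.
  assert (Hstep : forall i, (i < n)%nat -> forall k, Rabs (Y (S k) i - Y k i) <= E * s ^ k).
  { intros i Hi k. pose proof (coord_sq_le_inner n (vsub (Y (S k)) (Y k)) i Hi) as H1.
    pose proof (HD k). change (vsub (Y (S k)) (Y k) i) with (Y (S k) i - Y k i) in H1.
    assert (r ^ k <= (s ^ k) ^ 2) by (rewrite <- pow_mult, Nat.mul_comm, pow_mult; apply pow_incr; split; [auto|simpl; lra]).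
    assert (0 <= s ^ k) by (apply pow_le; lra).
    assert (D0 <= E * E) by (unfold E; nra).
    assert (Hsq : (Y (S k) i - Y k i) * (Y (S k) i - Y k i) <= (E * s ^ k) * (E * s ^ k)).
    { assert (r ^ k * D0 <= (s ^ k) ^ 2 * (E * E)).
      { apply Rmult_le_compat; auto. apply pow_le; auto. }
      assert (H5 : (s^k)^2*(E*E) = E*s^k*(E*s^k)) by ring. lra. }
    assert (0 <= E * s ^ k) by (unfold E; nra).
    rewrite <- (Rabs_right (E * s ^ k)) by lra.
    apply Rsqr_le_abs_0. unfold Rsqr. auto. }
  set (ys := fun i => epsilon (inhabits 0) (fun l => Un_cv (fun k => Y k i) l)).
  assert (Hys : forall i, (i < n)%nat -> Un_cv (fun k => Y k i) (ys i)).
  { intros i Hi. unfold ys. apply epsilon_spec.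
    destruct (R_complete (fun k => Y k i)) as [l Hl].
    apply (geom_cauchy _ s E Hs). unfold E; lra. apply Hstep; auto.
    exists l; auto. }
  exists ys. intros i Hi.
  assert (H1 : Un_cv (fun k => Y (S k) i) (ys i)) by (apply (cv_shift (fun k => Y k i)); auto).
  assert (H2 : Un_cv (fun k => Y (S k) i) (p i (ys i - tau * (mv n A ys i - u i)))).
  { change (fun k => Y (S k) i) with (fun k => p i (Y k i - tau * (mv n A (Y k) i - u i))).
    apply (cv_lip (fun k => Y k i - tau * (mv n A (Y k) i - u i)) _ (ys i - tau * (mv n A ys i - u i))).
    - apply CV_minus. apply Hys; auto. apply CV_mult. apply Un_cv_const. apply CV_minus.
      unfold mv. apply rsum_cv. intros j Hj. apply CV_mult. apply Un_cv_const. apply Hys; auto.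
      apply Un_cv_const.
    - intros k. apply Hp. }
  eapply UL_sequence; eauto.
Qed.

Definition charac (n : nat) (A : mat) (u y : vec) : Prop :=
  forall i, (i < n)%nat -> Rabs (u i - mv n A y i) <= 1 /\ y i * (u i - mv n A y i) = Rabs (y i).

Lemma charac_is_S n A u y : charac n A u y -> is_S n A u y.
Proof.
  intros H v. apply Rle_ge.
  cut (0 <= inner n (mv n A y) (vsub v y) + norm1 n v - norm1 n y - inner n u (vsub v y)). lra.
  unfold inner, norm1. rewrite <- rsum_plus, <- rsum_minus, <- rsum_minus.
  apply rsum_nonneg. intros i Hi. destruct (H i Hi) as [H1 H2]. unfold vsub.
  set (q := u i - mv n A y i) in *.
  assert (q * v i <= Rabs (v i)).
  { eapply Rle_trans. apply RRle_abs. rewrite Rabs_mult.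
    pose proof (Rabs_pos (v i)). nra. }
  replace (mv n A y i * (v i - y i) + Rabs (v i) - Rabs (y i) - u i * (v i - y i))
    with ((Rabs (v i) - q * v i) + (y i * q - Rabs (y i))) by (unfold q; ring).
  lra.
Qed.

Definition upd (y : vec) (i : nat) (a : R) : vec := fun j => if Nat.eqb j i then a else y j.

Lemma is_S_upd n A u y i a : (i < n)%nat -> is_S n A u y ->
  Rabs a - Rabs (y i) >= (u i - mv n A y i) * (a - y i).
Proof.
  intros Hi H. specialize (H (upd y i a)).
  assert (E1 : forall w : vec, inner n w (vsub (upd y i a) y) = w i * (a - y i)).
  { intros w. unfold inner. rewrite (rsum_ext n _ (fun j => if Nat.eqb j i then w j * (a - y j) else 0)).
    apply (rsum_delta n (fun j => w j * (a - y j)) i Hi).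
    intros j Hj. unfold vsub, upd. destruct (Nat.eqb j i); ring. }
  assert (E2 : norm1 n (upd y i a) = norm1 n y + (Rabs a - Rabs (y i))).
  { unfold norm1. rewrite (rsum_change n (fun j => Rabs (y j)) (fun j => Rabs (upd y i a j)) i Hi).
    unfold upd. rewrite Nat.eqb_refl. auto.
    intros j Hj Hji. unfold upd. destruct (Nat.eqb_spec j i); [lia|auto]. }
  rewrite !E1, E2 in H. lra.
Qed.

Lemma is_S_charac n A u y : is_S n A u y -> charac n A u y.
Proof.
  intros H i Hi. set (q := u i - mv n A y i).
  pose proof (is_S_upd n A u y i (y i + 1) Hi H) as H1.
  pose proof (is_S_upd n A u y i (y i - 1) Hi H) as H2.
  pose proof (is_S_upd n A u y i 0 Hi H) as H3. fold q in H1, H2, H3.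
  rewrite Rabs_R0 in H3.
  assert (Rabs (y i + 1) <= Rabs (y i) + 1) by (unfold Rabs; repeat destruct Rcase_abs; lra).
  assert (Rabs (y i - 1) <= Rabs (y i) + 1) by (unfold Rabs; repeat destruct Rcase_abs; lra).
  replace (y i + 1 - y i) with 1 in H1 by ring.
  replace (y i - 1 - y i) with (-1) in H2 by ring.
  assert (Hq : Rabs q <= 1) by (apply Rabs_le; lra).
  split; auto.
  assert (y i * q <= Rabs (y i)).
  { eapply Rle_trans. apply RRle_abs. rewrite Rabs_mult. pose proof (Rabs_pos (y i)). pose proof (Rabs_pos q). nra. }
  lra.
Qed.

Definition soft (t a : R) : R :=
  if Rlt_dec t a then a - t else if Rlt_dec a (- t) then a + t else 0.

Lemma soft_lip t a b : 0 < t -> Rabs (soft t a - soft t b) <= Rabs (a - b).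
Proof. intros Ht. unfold soft.
  destruct (Rlt_dec t a); destruct (Rlt_dec t b); try destruct (Rlt_dec a (-t)); try destruct (Rlt_dec b (-t));
  unfold Rabs; repeat destruct Rcase_abs; lra. Qed.

Lemma S_exists n A : spd n A -> forall u, exists y, charac n A u y.
Proof.
  intros hA u. destruct (fixed_point n A hA) as [tau [Ht Hfp]].
  destruct (Hfp u (fun _ a => soft tau a)) as [y Hy].
  { intros; apply soft_lip; auto. }
  exists y. intros i Hi. specialize (Hy i Hi).
  set (q := u i - mv n A y i) in *.
  replace (y i - tau * (mv n A y i - u i)) with (y i + tau * q) in Hy by (unfold q; ring).
  unfold soft in Hy.
  destruct (Rlt_dec tau (y i + tau * q)).
  - assert (q = 1) by (apply Rmult_eq_reg_l with tau; lra).
    rewrite H. split; unfold Rabs; repeat destruct Rcase_abs; nra.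
  - destruct (Rlt_dec (y i + tau * q) (- tau)).
    + assert (q = -1) by (apply Rmult_eq_reg_l with tau; lra).
      rewrite H. split; unfold Rabs; repeat destruct Rcase_abs; nra.
    + rewrite Hy, Rabs_R0. split; [|ring].
      rewrite Hy in n0, n1. apply Rabs_le. split.
      * apply Rmult_le_reg_l with tau; lra.
      * apply Rmult_le_reg_l with tau; lra.
Qed.

Lemma charac_mono n A u1 u2 y1 y2 : charac n A u1 y1 -> charac n A u2 y2 ->
  inner n (vsub y1 y2) (mv n A (vsub y1 y2)) <= inner n (vsub u1 u2) (vsub y1 y2).
Proof.
  intros H1 H2.
  cut (0 <= inner n (vsub u1 u2) (vsub y1 y2) - inner n (vsub y1 y2) (mv n A (vsub y1 y2))). lra.
  unfold inner. rewrite <- rsum_minus. apply rsum_nonneg. intros i Hi.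
  destruct (H1 i Hi) as [Ha1 Hb1]. destruct (H2 i Hi) as [Ha2 Hb2].
  rewrite mv_minus. unfold vsub.
  set (q1 := u1 i - mv n A y1 i) in *. set (q2 := u2 i - mv n A y2 i) in *.
  replace ((u1 i - u2 i) * (y1 i - y2 i) - (y1 i - y2 i) * (mv n A y1 i - mv n A y2 i))
    with ((q1 - q2) * (y1 i - y2 i)) by (unfold q1, q2; ring).
  assert (q1 * y2 i <= Rabs (y2 i)).
  { eapply Rle_trans. apply RRle_abs. rewrite Rabs_mult. pose proof (Rabs_pos (y2 i)). pose proof (Rabs_pos q1). nra. }
  assert (q2 * y1 i <= Rabs (y1 i)).
  { eapply Rle_trans. apply RRle_abs. rewrite Rabs_mult. pose proof (Rabs_pos (y1 i)). pose proof (Rabs_pos q2). nra. }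
  nra.
Qed.

Lemma spd_inj n A z : spd n A -> (forall i, (i < n)%nat -> mv n A z i = 0) -> forall i, (i < n)%nat -> z i = 0.
Proof.
  intros [_ Hp] H i Hi. apply NNPP. intros Hz.
  assert (0 < inner n z (mv n A z)) by (apply Hp; exists i; auto).
  assert (inner n z (mv n A z) = 0) by (unfold inner; apply rsum_zero; intros; rewrite H; auto; ring).
  lra.
Qed.

Lemma charac_unique n A u y1 y2 : spd n A -> charac n A u y1 -> charac n A u y2 ->
  forall i, (i < n)%nat -> y1 i = y2 i.
Proof.
  intros hA H1 H2 i Hi. pose proof (charac_mono n A u u y1 y2 H1 H2) as Hm.
  assert (E : inner n (vsub u u) (vsub y1 y2) = 0) by (unfold inner; apply rsum_zero; intros; unfold vsub; ring).
  rewrite E in Hm. apply NNPP. intros Hne.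
  assert (0 < inner n (vsub y1 y2) (mv n A (vsub y1 y2))).
  { apply (proj2 hA). exists i. split; auto. unfold vsub. lra. }
  lra.
Qed.

Lemma Ssol_charac n A u : spd n A -> charac n A u (Ssol n A u).
Proof.
  intros hA. apply is_S_charac. unfold Ssol. apply epsilon_spec.
  destruct (S_exists n A hA u) as [y Hy]. exists y. apply charac_is_S; auto.
Qed.

Lemma Ssol_eq n A u y : spd n A -> charac n A u y -> forall i, (i < n)%nat -> Ssol n A u i = y i.
Proof. intros hA H. apply (charac_unique n A u); auto. apply Ssol_charac; auto. Qed.

Lemma rowsum_bound n (P : mat) : exists C, 0 < C /\ forall i, (i < n)%nat -> rsum n (fun j => Rabs (P i j)) <= C.
Proof. apply finite_max. Qed.

Lemma S_lip n A : spd n A -> exists K, 0 < K /\ forall u1 u2 y1 y2, charac n A u1 y1 -> charac n A u2 y2 ->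
  forall i, (i < n)%nat ->
    Rabs (y1 i - y2 i) <= K * norm1 n (vsub u1 u2) /\
    Rabs ((u1 i - mv n A y1 i) - (u2 i - mv n A y2 i)) <= K * norm1 n (vsub u1 u2).
Proof.
  intros hA. destruct (coercive n A hA) as [c [Hc Hco]].
  destruct (rowsum_bound n A) as [Ra [HRa HRa2]].
  set (K0 := / c).
  assert (HK0 : 0 < K0) by (apply Rinv_0_lt_compat; auto).
  assert (Hy : forall u1 u2 y1 y2, charac n A u1 y1 -> charac n A u2 y2 ->
    forall i, (i < n)%nat -> Rabs (y1 i - y2 i) <= K0 * norm1 n (vsub u1 u2)).
  { intros u1 u2 y1 y2 H1 H2 i Hi.
    pose proof (charac_mono n A u1 u2 y1 y2 H1 H2) as Hm.
    set (d := vsub y1 y2) in *. set (du := vsub u1 u2) in *.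
    pose proof (Hco d) as Hc1.
    assert (Hamgm : inner n du d <= inner n du du / (2 * c) + c * inner n d d / 2).
    { unfold inner. unfold Rdiv. rewrite <- rsum_scal_r. rewrite <- rsum_scal, <- rsum_scal_r.
      rewrite <- rsum_plus. apply rsum_le. intros j Hj.
      assert (0 <= (du j - c * d j) ^ 2) by apply pow2_ge_0.
      apply Rmult_le_reg_l with (2 * c). lra.
      replace (2 * c * (du j * du j * / (2 * c) + c * (d j * d j) * / 2)) with (du j * du j + c * c * (d j * d j)) by (field; lra).
      nra. }
    assert (Hdd : inner n d d <= inner n du du / (c * c)).
    { apply Rmult_le_reg_l with (c * c). nra.
      replace (c * c * (inner n du du / (c * c))) with (inner n du du) by (field; lra).
      assert (c * inner n d d <= inner n du du / (2 * c) + c * inner n d d / 2) by lra.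
      assert (Hz : c * (c * inner n d d) <= c * (inner n du du / (2 * c) + c * inner n d d / 2)) by (apply Rmult_le_compat_l; lra).
      replace (c * (inner n du du / (2 * c) + c * inner n d d / 2)) with (inner n du du / 2 + c * c * inner n d d / 2) in Hz by (field; lra).
      lra. }
    pose proof (coord_sq_le_inner n d i Hi) as Hdi.
    pose proof (inner_le_norm1_sq n du) as Hdu.
    pose proof (norm1_nonneg n du).
    assert (d i * d i <= (K0 * norm1 n du) * (K0 * norm1 n du)).
    { unfold K0. replace (/ c * norm1 n du * (/ c * norm1 n du)) with (norm1 n du * norm1 n du / (c * c)) by (field; lra).
      eapply Rle_trans. apply Hdi. eapply Rle_trans. apply Hdd. unfold Rdiv. apply Rmult_le_compat_r.
      apply Rlt_le, Rinv_0_lt_compat; nra. auto. }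
    rewrite <- (Rabs_right (K0 * norm1 n du)) by nra. apply Rsqr_le_abs_0. unfold Rsqr. auto. }
  exists (K0 + 1 + Ra * INR n * K0). split.
  { assert (0 <= Ra * INR n * K0). apply Rmult_le_pos; [|lra]. apply Rmult_le_pos; [lra|apply pos_INR]. lra. }
  intros u1 u2 y1 y2 H1 H2 i Hi.
  pose proof (norm1_nonneg n (vsub u1 u2)) as Hn.
  assert (0 <= Ra * INR n * K0). apply Rmult_le_pos; [|lra]. apply Rmult_le_pos; [lra|apply pos_INR].
  split.
  - pose proof (Hy u1 u2 y1 y2 H1 H2 i Hi). nra.
  - replace ((u1 i - mv n A y1 i) - (u2 i - mv n A y2 i)) with (vsub u1 u2 i - mv n A (vsub y1 y2) i)
      by (rewrite mv_minus; unfold vsub; ring).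
    eapply Rle_trans. apply Rabs_triang. rewrite Rabs_Ropp.
    pose proof (coord_le_norm1 n (vsub u1 u2) i Hi).
    pose proof (mv_bound n A (vsub y1 y2) i).
    assert (norm1 n (vsub y1 y2) <= INR n * (K0 * norm1 n (vsub u1 u2))).
    { apply norm1_bound. intros j Hj. unfold vsub at 1. apply Hy; auto. }
    pose proof (HRa2 i Hi). pose proof (norm1_nonneg n (vsub y1 y2)).
    assert (rsum n (fun j => Rabs (A i j)) * norm1 n (vsub y1 y2) <= Ra * (INR n * (K0 * norm1 n (vsub u1 u2)))).
    { apply Rmult_le_compat; auto. apply rsum_nonneg; intros; apply Rabs_pos. }
    nra.
Qed.

Lemma mmul_idm_r n P i j : (j < n)%nat -> mmul n P idm i j = P i j.
Proof. intros Hj. unfold mmul, idm.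
  rewrite (rsum_ext n _ (fun k => if Nat.eqb k j then P i k else 0)).
  apply (rsum_delta n (fun k => P i k) j Hj).
  intros k _. destruct (Nat.eqb k j); ring. Qed.

Lemma mmul_idm_l n P i j : (i < n)%nat -> mmul n idm P i j = P i j.
Proof. intros Hi. unfold mmul, idm.
  rewrite (rsum_ext n _ (fun k => if Nat.eqb k i then P k j else 0)).
  apply (rsum_delta n (fun k => P k j) i Hi).
  intros k _. rewrite Nat.eqb_sym. destruct (Nat.eqb k i); ring. Qed.

Lemma spd_inverse n A : spd n A -> exists X, meq n (mmul n A X) idm /\ meq n (mmul n X A) idm.
Proof.
  intros hA. destruct (fixed_point n A hA) as [tau [Ht Hfp]].
  assert (Hcol : forall j, exists y : vec, forall i, (i < n)%nat -> mv n A y i = idm i j).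
  { intros j. destruct (Hfp (fun i => idm i j) (fun _ a => a)) as [y Hy].
    { intros; lra. }
    exists y. intros i Hi. specialize (Hy i Hi).
    assert (tau * (mv n A y i - idm i j) = 0) by lra.
    apply Rmult_integral in H. destruct H; lra. }
  set (col := fun j => epsilon (inhabits (fun _ : nat => 0)) (fun y : vec => forall i, (i < n)%nat -> mv n A y i = idm i j)).
  assert (Hc : forall j i, (i < n)%nat -> mv n A (col j) i = idm i j).
  { intros j. unfold col. apply epsilon_spec. apply Hcol. }
  set (X := fun i j => col j i).
  assert (HAX : meq n (mmul n A X) idm).
  { intros i j Hi Hj. apply Hc; auto. }
  exists X. split; auto.
  intros i j Hi Hj.
  set (z := fun k => mmul n X A k j - idm k j).
  assert (Hz : forall k, (k < n)%nat -> mv n A z k = 0).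
  { intros k Hk. unfold z.
    replace (mv n A (fun k0 => mmul n X A k0 j - idm k0 j) k) with (mv n A (vsub (fun k0 => mmul n X A k0 j) (fun k0 => idm k0 j)) k) by auto.
    rewrite mv_minus. unfold mv.
    change (rsum n (fun j0 => A k j0 * mmul n X A j0 j)) with (mmul n A (mmul n X A) k j).
    change (rsum n (fun j0 => A k j0 * idm j0 j)) with (mmul n A idm k j).
    rewrite <- mmul_assoc, mmul_idm_r by auto.
    unfold mmul at 1. rewrite (rsum_ext n _ (fun l => idm k l * A l j)).
    change (rsum n (fun l => idm k l * A l j)) with (mmul n idm A k j). rewrite mmul_idm_l by auto. ring.
    intros l Hl. rewrite HAX; auto. }
  pose proof (spd_inj n A z hA Hz i Hi). unfold z in H. lra.
Qed.

Lemma minv_spec n M : spd n M -> meq n (mmul n M (minv n M)) idm /\ meq n (mmul n (minv n M) M) idm.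
Proof. intros H. unfold minv. apply epsilon_spec. apply spd_inverse; auto. Qed.

Lemma A_of_spd n A N : spd n A -> spd n (A_of A N).
Proof.
  intros hA. destruct (coercive n A hA) as [c [Hc Hco]]. split.
  - intros i j Hi Hj. unfold A_of. rewrite orb_comm, Nat.eqb_sym, (proj1 hA i j) by auto. auto.
  - intros x [i [Hi Hx]].
    set (x' := fun k => if N k then 0 else x k).
    assert (Hmv : forall k, (k < n)%nat -> mv n (A_of A N) x k = if N k then x k else mv n A x' k).
    { intros k Hk. unfold mv, A_of. destruct (N k) eqn:Nk.
      - simpl. rewrite (rsum_ext n _ (fun j => if Nat.eqb j k then x j else 0)).
        apply (rsum_delta n x k Hk).
        intros j Hj. rewrite Nat.eqb_sym. destruct (Nat.eqb j k); ring.
      - simpl. apply rsum_ext. intros j Hj. unfold x'. destruct (N j) eqn:Nj.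
        + destruct (Nat.eqb_spec k j). subst. congruence. ring.
        + auto. }
    assert (E : inner n x (mv n (A_of A N) x) =
      rsum n (fun k => if N k then x k * x k else 0) + inner n x' (mv n A x')).
    { unfold inner. rewrite <- rsum_plus. apply rsum_ext. intros k Hk. rewrite Hmv by auto.
      unfold x'. destruct (N k); ring. }
    rewrite E.
    assert (H1 : 0 <= rsum n (fun k => if N k then x k * x k else 0)).
    { apply rsum_nonneg. intros k _. destruct (N k). apply Rle_0_sqr. lra. }
    assert (H2 : 0 <= inner n x' (mv n A x')).
    { pose proof (Hco x'). pose proof (inner_nonneg n x'). nra. }
    destruct (N i) eqn:Ni.
    + assert (x i * x i <= rsum n (fun k => if N k then x k * x k else 0)).
      { pose proof (rsum_elem n (fun k => if N k then x k * x k else 0) i) as He. simpl in He. rewrite Ni in He.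
        apply He; auto. intros k _. destruct (N k). apply Rle_0_sqr. lra. }
      assert (0 < x i * x i) by (apply Rsqr_pos_lt; auto). lra.
    + assert (0 < inner n x' (mv n A x')).
      { apply (proj2 hA). exists i. split; auto. unfold x'. rewrite Ni. auto. }
      lra.
Qed.

Lemma small_zero a C : 0 <= C -> (forall e, 0 < e -> Rabs a <= C * e) -> a = 0.
Proof. intros HC H. apply NNPP; intros Ha. assert (0 < Rabs a) by (apply Rabs_pos_lt; auto).
  specialize (H (Rabs a / (2 * (C + 1)))). 
  assert (0 < Rabs a / (2 * (C + 1))) by (apply Rdiv_lt_0_compat; lra).
  specialize (H H1). 
  assert (C * (Rabs a / (2 * (C + 1))) < Rabs a).
  { replace (C * (Rabs a / (2 * (C + 1)))) with (Rabs a * (C / (2 * (C + 1)))) by (field; lra).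
    assert (C / (2 * (C + 1)) < 1). { apply Rmult_lt_reg_r with (2 * (C + 1)). lra.
      replace (C / (2 * (C + 1)) * (2 * (C + 1))) with C by (field; lra). lra. }
    nra. }
  lra. Qed.

Lemma ev_idm j t i : ev j t i = t * idm i j.
Proof. unfold ev, idm. destruct (Nat.eqb i j); ring. Qed.

Lemma norm1_shift n w h : norm1 n (vsub (vadd w h) w) = norm1 n h.
Proof. unfold norm1. apply rsum_ext; intros. unfold vsub, vadd. f_equal; ring. Qed.

Lemma deriv_est n A w J Ra i j : has_deriv n (Ssol n A) w J ->
  (forall k, (k < n)%nat -> rsum n (fun l => Rabs (A k l)) <= Ra) -> 0 < Ra ->
  (i < n)%nat -> (j < n)%nat ->
  forall e, 0 < e -> exists d, 0 < d /\ forall t, Rabs t < d ->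
    Rabs (Ssol n A (vadd w (ev j t)) i - Ssol n A w i - t * J i j) <= e * Rabs t /\
    Rabs (((vadd w (ev j t)) i - mv n A (Ssol n A (vadd w (ev j t))) i) - (w i - mv n A (Ssol n A w) i)
          - t * (idm i j - mmul n A J i j)) <= Ra * e * Rabs t.
Proof.
  intros HJ HRa HRa0 Hi Hj e He. destruct (HJ e He) as [d [Hd Hd2]].
  exists d. split; auto. intros t Ht.
  set (h := ev j t).
  assert (Hh : norm1 n h = Rabs t) by (apply norm1_ev; auto).
  set (yt := Ssol n A (vadd w h)). set (y := Ssol n A w).
  set (r := vsub (vsub yt y) (mv n J h)).
  assert (Hr : norm1 n r <= e * Rabs t) by (rewrite <- Hh; apply Hd2; lra).
  assert (Eri : r i = yt i - y i - t * J i j) by (unfold r, vsub; unfold h; rewrite mv_ev; auto).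
  split.
  - rewrite <- Eri. eapply Rle_trans. apply (coord_le_norm1 n); auto. auto.
  - assert (E2 : mv n A (vsub yt y) i = t * mmul n A J i j + mv n A r i).
    { rewrite (mv_ext n A (vsub yt y) (vadd (mv n J h) r)).
      rewrite mv_plus, mv_mv. unfold h. rewrite mv_ev; auto.
      intros k Hk. unfold vadd, r, vsub. ring. }
    replace (vadd w h i - mv n A yt i - (w i - mv n A y i) - t * (idm i j - mmul n A J i j))
      with (- mv n A r i).
    2:{ rewrite <- (Rminus_0_r (mv n A yt i)).
        assert (mv n A yt i - mv n A y i = mv n A (vsub yt y) i) by (rewrite mv_minus; auto).
        unfold vadd, h. rewrite ev_idm. lra. }
    rewrite Rabs_Ropp. eapply Rle_trans. apply mv_bound.
    pose proof (HRa i Hi). pose proof (norm1_nonneg n r).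
    assert (0 <= rsum n (fun l => Rabs (A i l))) by (apply rsum_nonneg; intros; apply Rabs_pos).
    replace (Ra * e * Rabs t) with (Ra * (e * Rabs t)) by ring.
    apply Rmult_le_compat; auto.
Qed.

Lemma charac_small y q : Rabs q <= 1 -> y * q = Rabs y -> Rabs q < 1 -> y = 0.
Proof. intros H1 H2 H3. apply NNPP; intros Hy.
  assert (0 < Rabs y) by (apply Rabs_pos_lt; auto).
  assert (y * q <= Rabs y * Rabs q) by (rewrite <- Rabs_mult; apply RRle_abs). nra. Qed.

Lemma charac_sign y q : y * q = Rabs y -> Rabs q <= 1 -> y <> 0 -> (0 < y /\ q = 1) \/ (y < 0 /\ q = -1).
Proof. intros H1 H2 H3. destruct (Rlt_dec 0 y).
  - left. split; auto. rewrite Rabs_right in H1 by lra. apply Rmult_eq_reg_l with y; lra.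
  - right. split. lra. rewrite Rabs_left in H1 by lra. apply Rmult_eq_reg_l with y; lra. Qed.

Lemma diff_struct n A w J : spd n A -> has_deriv n (Ssol n A) w J ->
  forall i, (i < n)%nat ->
    (Ssol n A w i = 0 /\ Rabs (qvec n A w i) < 1 /\ forall j, (j < n)%nat -> J i j = 0) \/
    (Ssol n A w i <> 0 /\ forall j, (j < n)%nat -> mmul n A J i j = idm i j).
Proof.
  intros hA HJ.
  destruct (S_lip n A hA) as [K [HK HKl]].
  destruct (rowsum_bound n A) as [Ra [HRa0 HRa]].
  set (y := Ssol n A w).
  set (q := fun k => w k - mv n A y k).
  assert (Hc : charac n A w y) by (apply Ssol_charac; auto).
  assert (Hlip : forall j t k, (j < n)%nat -> (k < n)%nat ->
     Rabs (Ssol n A (vadd w (ev j t)) k - y k) <= K * Rabs t /\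
     Rabs (((vadd w (ev j t)) k - mv n A (Ssol n A (vadd w (ev j t))) k) - q k) <= K * Rabs t).
  { intros j t k Hj Hk. rewrite <- (norm1_ev n j t Hj). rewrite <- (norm1_shift n w).
    apply HKl; auto. apply Ssol_charac; auto. }
  assert (Hct : forall j t k, (k < n)%nat ->
     Rabs ((vadd w (ev j t)) k - mv n A (Ssol n A (vadd w (ev j t))) k) <= 1 /\
     Ssol n A (vadd w (ev j t)) k * ((vadd w (ev j t)) k - mv n A (Ssol n A (vadd w (ev j t))) k)
       = Rabs (Ssol n A (vadd w (ev j t)) k)).
  { intros j t k Hk. apply (Ssol_charac n A (vadd w (ev j t)) hA k Hk). }
  assert (L1 : forall i, (i < n)%nat -> y i = 0 -> Rabs (q i) < 1 -> forall j, (j < n)%nat -> J i j = 0).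
  { intros i Hi Hy Hq j Hj. apply (small_zero _ 1). lra. intros e He.
    destruct (deriv_est n A w J Ra i j HJ HRa HRa0 Hi Hj e He) as [d [Hd Hd2]].
    set (t := Rmin d ((1 - Rabs (q i)) / K) / 2).
    assert (Ht0 : 0 < t). { unfold t. assert (0 < Rmin d ((1 - Rabs (q i)) / K)) by (apply Rmin_glb_lt; auto; apply Rdiv_lt_0_compat; lra). lra. }
    assert (Htd : Rabs t < d). { rewrite Rabs_right by lra. unfold t. pose proof (Rmin_l d ((1 - Rabs (q i)) / K)). lra. }
    assert (HtK : K * t < 1 - Rabs (q i)).
    { unfold t. pose proof (Rmin_r d ((1 - Rabs (q i)) / K)).
      apply Rle_lt_trans with (K * (((1 - Rabs (q i)) / K) / 2)).
      apply Rmult_le_compat_l; lra. replace (K * ((1 - Rabs (q i)) / K / 2)) with ((1 - Rabs (q i)) / 2) by (field; lra). lra. }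
    destruct (Hd2 t Htd) as [E1 _].
    destruct (Hlip j t i Hj Hi) as [_ E3]. destruct (Hct j t i Hi) as [C1 C2].
    rewrite (Rabs_right t) in E3 by lra.
    assert (Rabs (vadd w (ev j t) i - mv n A (Ssol n A (vadd w (ev j t))) i) < 1).
    { pose proof (Rabs_triang_inv (vadd w (ev j t) i - mv n A (Ssol n A (vadd w (ev j t))) i) (q i)). lra. }
    pose proof (charac_small _ _ C1 C2 H) as Hz.
    rewrite Hz in E1. fold y in E1. rewrite Hy in E1. rewrite (Rabs_right t) in E1 by lra.
    replace (0 - 0 - t * J i j) with (- (t * J i j)) in E1 by ring. rewrite Rabs_Ropp, Rabs_mult, Rabs_right in E1 by lra.
    apply Rmult_le_reg_l with t; lra. }
  assert (L2 : forall i, (i < n)%nat -> y i <> 0 -> forall j, (j < n)%nat -> mmul n A J i j = idm i j).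
  { intros i Hi Hy j Hj. apply Rminus_diag_uniq_sym. apply (small_zero _ Ra). lra. intros e He.
    destruct (deriv_est n A w J Ra i j HJ HRa HRa0 Hi Hj e He) as [d [Hd Hd2]].
    assert (Hyp : 0 < Rabs (y i)) by (apply Rabs_pos_lt; auto).
    set (t := Rmin d (Rabs (y i) / K) / 2).
    assert (Ht0 : 0 < t). { unfold t. assert (0 < Rmin d (Rabs (y i) / K)) by (apply Rmin_glb_lt; auto; apply Rdiv_lt_0_compat; lra). lra. }
    assert (Htd : Rabs t < d). { rewrite Rabs_right by lra. unfold t. pose proof (Rmin_l d (Rabs (y i) / K)). lra. }
    assert (HtK : K * t < Rabs (y i)).
    { unfold t. pose proof (Rmin_r d (Rabs (y i) / K)).
      apply Rle_lt_trans with (K * ((Rabs (y i) / K) / 2)).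
      apply Rmult_le_compat_l; lra. replace (K * (Rabs (y i) / K / 2)) with (Rabs (y i) / 2) by (field; lra). lra. }
    destruct (Hd2 t Htd) as [_ E2].
    destruct (Hlip j t i Hj Hi) as [E3 _]. destruct (Hct j t i Hi) as [C1 C2].
    destruct (Hc i Hi) as [C3 C4]. fold q in C3, C4.
    rewrite (Rabs_right t) in E3 by lra.
    set (yt := Ssol n A (vadd w (ev j t))) in *.
    set (qt := vadd w (ev j t) i - mv n A yt i) in *.
    assert (Hyt : yt i <> 0). { intros Hz. rewrite Hz in E3. rewrite Rminus_0_l, Rabs_Ropp in E3. lra. }
    assert (Hqq : qt = q i).
    { unfold q. destruct (charac_sign _ _ C4 C3 Hy) as [[Ha Hb]|[Ha Hb]];
      destruct (charac_sign _ _ C2 C1 Hyt) as [[Hc1 Hc2]|[Hc1 Hc2]]; try lra;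
      unfold Rabs in E3; destruct Rcase_abs in E3; unfold Rabs in HtK; destruct Rcase_abs in HtK; lra. }
    change (w i - mv n A (Ssol n A w) i) with (q i) in E2. rewrite Hqq in E2. rewrite (Rabs_right t) in E2 by lra.
    replace (q i - q i - t * (idm i j - mmul n A J i j)) with (- (t * (idm i j - mmul n A J i j))) in E2 by ring.
    rewrite Rabs_Ropp, Rabs_mult, (Rabs_right t) in E2 by lra.
    apply Rmult_le_reg_l with t; lra. }
  assert (L3 : forall i, (i < n)%nat -> y i = 0 -> Rabs (q i) = 1 -> forall j, (j < n)%nat ->
                J i j = 0 /\ mmul n A J i j = idm i j).
  { intros i Hi Hy Hq j Hj.
    assert (Hs : q i = 1 \/ q i = -1) by (unfold Rabs in Hq; destruct Rcase_abs in Hq; lra).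
    split.
    - apply (small_zero _ 1). lra. intros e He.
      destruct (deriv_est n A w J Ra i j HJ HRa HRa0 Hi Hj e He) as [d [Hd Hd2]].
      set (tau := Rmin d (1 / K) / 2).
      assert (Ht0 : 0 < tau). { unfold tau. assert (0 < Rmin d (1 / K)) by (apply Rmin_glb_lt; auto; apply Rdiv_lt_0_compat; lra). lra. }
      assert (Htd : tau < d). { unfold tau. pose proof (Rmin_l d (1 / K)). lra. }
      assert (HtK : K * tau < 1).
      { unfold tau. pose proof (Rmin_r d (1 / K)).
        apply Rle_lt_trans with (K * ((1 / K) / 2)).
        apply Rmult_le_compat_l; lra. replace (K * (1 / K / 2)) with (1 / 2) by (field; lra). lra. }
      assert (Hsg : forall t, Rabs t = tau -> q i * (t * J i j) >= - (e * tau)).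
      { intros t Ht. assert (Htd' : Rabs t < d) by lra.
        destruct (Hd2 t Htd') as [E1 _].
        destruct (Hlip j t i Hj Hi) as [_ E3]. destruct (Hct j t i Hi) as [C1 C2].
        set (yt := Ssol n A (vadd w (ev j t))) in *.
        set (qt := vadd w (ev j t) i - mv n A yt i) in *.
        rewrite Ht in E1, E3.
        assert (Hsy : 0 <= q i * yt i).
        { destruct (Req_dec (yt i) 0) as [Hz|Hz]. rewrite Hz; lra.
          destruct (charac_sign _ _ C2 C1 Hz) as [[Ha Hb]|[Ha Hb]]; unfold Rabs in E3; destruct Rcase_abs in E3; nra. }
        fold y in E1. rewrite Hy in E1.
        unfold Rabs in E1; destruct Rcase_abs in E1; nra. }
      assert (H1 := Hsg tau). assert (H2 := Hsg (- tau)).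
      rewrite Rabs_right in H1 by lra. rewrite Rabs_Ropp, Rabs_right in H2 by lra.
      specialize (H1 eq_refl). specialize (H2 eq_refl).
      unfold Rabs. destruct Rcase_abs; destruct Hs as [Hs|Hs]; rewrite Hs in H1, H2; nra.
    - apply Rminus_diag_uniq_sym. apply (small_zero _ Ra). lra. intros e He.
      destruct (deriv_est n A w J Ra i j HJ HRa HRa0 Hi Hj e He) as [d [Hd Hd2]].
      set (tau := d / 2).
      assert (Hsg : forall t, Rabs t = tau -> q i * (t * (idm i j - mmul n A J i j)) <= Ra * e * tau).
      { intros t Ht. assert (Htd' : Rabs t < d) by (unfold tau in Ht; lra).
        destruct (Hd2 t Htd') as [_ E2]. destruct (Hct j t i Hi) as [C1 C2].
        set (yt := Ssol n A (vadd w (ev j t))) in *.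
        set (qt := vadd w (ev j t) i - mv n A yt i) in *.
        rewrite Ht in E2. change (w i - mv n A (Ssol n A w) i) with (q i) in E2.
        assert (q i * qt <= 1) by (unfold Rabs in C1; destruct Rcase_abs in C1; destruct Hs as [Hs|Hs]; rewrite Hs; lra).
        assert (q i * q i = 1) by (destruct Hs as [Hs|Hs]; rewrite Hs; lra).
        unfold Rabs in E2; destruct Rcase_abs in E2; destruct Hs as [Hs|Hs]; rewrite Hs in *; nra. }
      assert (Ht0 : 0 < tau) by (unfold tau; lra).
      assert (H1 := Hsg tau). assert (H2 := Hsg (- tau)).
      rewrite Rabs_right in H1 by lra. rewrite Rabs_Ropp, Rabs_right in H2 by lra.
      specialize (H1 eq_refl). specialize (H2 eq_refl).
      unfold Rabs. destruct Rcase_abs; destruct Hs as [Hs|Hs]; rewrite Hs in H1, H2; nra. }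
  assert (Hcls : forall i, (i < n)%nat -> (y i = 0 /\ Rabs (q i) < 1) \/ y i <> 0 \/ (y i = 0 /\ Rabs (q i) = 1)).
  { intros i Hi. destruct (Hc i Hi) as [C1 _]. destruct (Req_dec (y i) 0); [|tauto].
    destruct (Rle_lt_or_eq_dec _ _ C1); tauto. }
  assert (NoB : forall i, (i < n)%nat -> ~ (y i = 0 /\ Rabs (q i) = 1)).
  { intros i Hi [Hy Hq].
    set (z := fun k => J k i).
    assert (Hz : forall k, (k < n)%nat -> z k * mv n A z k = 0).
    { intros k Hk. unfold z. change (mv n A (fun k0 => J k0 i) k) with (mmul n A J k i).
      destruct (Hcls k Hk) as [[H1 H2]|[H1|[H1 H2]]].
      - rewrite (L1 k Hk H1 H2 i Hi). ring.
      - rewrite (L2 k Hk H1 i Hi). unfold idm. destruct (Nat.eqb_spec k i). subst. congruence. ring.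
      - rewrite (proj1 (L3 k Hk H1 H2 i Hi)). ring. }
    assert (Hz0 : forall k, (k < n)%nat -> z k = 0).
    { intros k Hk. apply NNPP. intros Hnz.
      assert (0 < inner n z (mv n A z)) by (apply (proj2 hA); exists k; auto).
      assert (inner n z (mv n A z) = 0) by (unfold inner; apply rsum_zero; auto). lra. }
    pose proof (proj2 (L3 i Hi Hy Hq i Hi)) as H3.
    change (mmul n A J i i) with (mv n A z i) in H3.
    rewrite (mv_ext n A z (fun _ => 0)) in H3 by auto.
    unfold mv in H3. rewrite rsum_zero in H3 by (intros; ring). unfold idm in H3. rewrite Nat.eqb_refl in H3. lra. }
  intros i Hi. destruct (Hcls i Hi) as [[H1 H2]|[H1|H1]].
  - left. split; [auto|split; [auto|]]. intros; apply L1; auto.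
  - right. split; [auto|]. intros; apply L2; auto.
  - exfalso. apply (NoB i Hi H1).
Qed.

Lemma AN_row_in A N i k : N i = true -> A_of A N i k = idm i k.
Proof. intros H. unfold A_of, idm. rewrite H. simpl. auto. Qed.

Lemma AN_row_out A N n M i j : (i < n)%nat -> N i = false ->
  (forall k, (k < n)%nat -> N k = true -> M k j = 0) ->
  mmul n (A_of A N) M i j = mmul n A M i j.
Proof. intros Hi Ni HM. unfold mmul. apply rsum_ext. intros k Hk. unfold A_of. rewrite Ni. simpl.
  destruct (N k) eqn:Nk. rewrite HM by auto. ring. auto. Qed.

Lemma char_to_M n A N M : spd n A ->
  (forall i, (i < n)%nat -> N i = true -> forall j, (j < n)%nat -> M i j = 0) ->
  (forall i, (i < n)%nat -> N i = false -> forall j, (j < n)%nat -> mmul n A M i j = idm i j) ->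
  meq n M (mmul n (minv n (A_of A N)) (chi N)).
Proof.
  intros hA Ha Hb.
  destruct (minv_spec n (A_of A N) (A_of_spd n A N hA)) as [_ HX].
  set (X := minv n (A_of A N)) in *.
  assert (HAM : meq n (mmul n (A_of A N) M) (chi N)).
  { intros i j Hi Hj. unfold chi. destruct (N i) eqn:Ni.
    - unfold mmul. rewrite (rsum_ext n _ (fun k => idm i k * M k j)).
      change (rsum n (fun k => idm i k * M k j)) with (mmul n idm M i j). rewrite mmul_idm_l by auto.
      rewrite Ha by auto. destruct (Nat.eqb i j); auto.
      intros k Hk. rewrite (AN_row_in A N i k Ni). auto.
    - rewrite (AN_row_out A N n M i j Hi Ni). rewrite Hb by auto. unfold idm. auto.
      intros k Hk Nk. apply Ha; auto. }
  intros i j Hi Hj.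
  unfold mmul at 1. rewrite (rsum_ext n _ (fun k => X i k * mmul n (A_of A N) M k j)).
  change (rsum n (fun k => X i k * mmul n (A_of A N) M k j)) with (mmul n X (mmul n (A_of A N) M) i j).
  rewrite <- mmul_assoc. unfold mmul at 1.
  rewrite (rsum_ext n _ (fun k => idm i k * M k j)).
  change (rsum n (fun k => idm i k * M k j)) with (mmul n idm M i j). rewrite mmul_idm_l by auto. auto.
  intros k Hk. rewrite HX; auto.
  intros k Hk. rewrite HAM; auto.
Qed.

Lemma inf_often (x : nat -> R) c L : (forall N, exists k, (k >= N)%nat /\ x k = c) -> Un_cv x L -> L = c.
Proof. intros H Hc. apply NNPP; intros Hne.
  assert (0 < Rabs (L - c)) by (apply Rabs_pos_lt; lra).
  destruct (Hc (Rabs (L - c)) H0) as [N HN]. destruct (H N) as [k [Hk Hxk]].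
  specialize (HN k Hk). unfold R_dist in HN. rewrite Hxk in HN. rewrite Rabs_minus_sym in HN. lra. Qed.

Lemma eventually (x : nat -> R) c L : (exists N, forall k, (k >= N)%nat -> x k = c) -> Un_cv x L -> L = c.
Proof. intros [N HN] Hc. apply (inf_often x c L); auto. intros N'. exists (max N N'). split. lia. apply HN. lia. Qed.

Lemma mmul_cv n A (J : nat -> mat) M i j : (forall k, (k < n)%nat -> Un_cv (fun m => J m k j) (M k j)) ->
  Un_cv (fun m => mmul n A (J m) i j) (mmul n A M i j).
Proof. intros H. unfold mmul. apply (rsum_cv n (fun m k => A i k * J m k j) (fun k => A i k * M k j)).
  intros k Hk. apply CV_mult. apply Un_cv_const. apply H; auto. Qed.

Lemma cont_at n A u (w : nat -> vec) : spd n A -> vseq_cv n w u ->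
  forall eta, 0 < eta -> exists N, forall k, (k >= N)%nat -> forall i, (i < n)%nat ->
    Rabs (Ssol n A (w k) i - Ssol n A u i) < eta /\ Rabs (qvec n A (w k) i - qvec n A u i) < eta.
Proof.
  intros hA Hw eta Heta. destruct (S_lip n A hA) as [K [HK HKl]].
  destruct (Hw (eta / K)) as [N HN]. apply Rdiv_lt_0_compat; auto.
  exists N. intros k Hk i Hi. specialize (HN k Hk).
  destruct (HKl (w k) u (Ssol n A (w k)) (Ssol n A u) (Ssol_charac n A (w k) hA) (Ssol_charac n A u hA) i Hi) as [H1 H2].
  assert (K * norm1 n (vsub (w k) u) < eta).
  { apply Rmult_lt_reg_l with (/ K). apply Rinv_0_lt_compat; auto.
    replace (/ K * (K * norm1 n (vsub (w k) u))) with (norm1 n (vsub (w k) u)) by (field; lra).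
    replace (/ K * eta) with (eta / K) by (unfold Rdiv; ring). auto. }
  split; [lra|]. unfold qvec, vsub at 1 2. lra.
Qed.

Definition B0_of (n : nat) (A : mat) (u : vec) (M : mat) : nat -> bool := fun i =>
  if lt_dec i n then
    (if biactive n A u i then
      (if excluded_middle_informative (forall j, (j < n)%nat -> M i j = 0) then true else false)
     else false)
  else false.

Lemma dir1 n A u M : spd n A -> bouligand n A u M ->
    exists B0 : nat -> bool,
      (forall i, B0 i = true -> (i < n)%nat /\ biactive n A u i = true) /\
      let N := fun i => orb (strongly_active n A u i) (B0 i) in
      meq n M (mmul n (minv n (A_of A N)) (chi N)).
Proof.
  intros hA [w [J [Hw [HJ HM]]]].
  exists (B0_of n A u M). split.
  { intros i. unfold B0_of. destruct (lt_dec i n); [|discriminate].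
    destruct (biactive n A u i); [|discriminate]. auto. }
  intros N.
  set (y := Ssol n A u). set (q := qvec n A u).
  assert (Hc : charac n A u y) by (apply Ssol_charac; auto).
  assert (Hqi : forall i, q i = u i - mv n A y i) by auto.
  pose proof (fun k => diff_struct n A (w k) (J k) hA (HJ k)) as HD.
  apply char_to_M; auto.
  - intros i Hi Ni j Hj. unfold N in Ni. apply orb_true_iff in Ni. destruct Ni as [Ns|Nb].
    + unfold strongly_active in Ns. destruct (Rlt_dec (Rabs (qvec n A u i)) 1) as [Hq|]; [|discriminate].
      destruct (cont_at n A u w hA Hw ((1 - Rabs (q i)) / 2)) as [N0 HN0].
      { fold q in Hq. lra. }
      apply (eventually (fun k => J k i j) 0 (M i j)); [|apply HM; auto].
      exists N0. intros k Hk. destruct (HN0 k Hk i Hi) as [_ H2].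
      destruct (HD k i Hi) as [[_ [_ H3]]|[H3 _]]. apply H3; auto.
      exfalso. destruct (Ssol_charac n A (w k) hA i Hi) as [C1 C2].
      destruct (charac_sign _ _ C2 C1 H3) as [[_ Hsg]|[_ Hsg]];
      change (w k i - mv n A (Ssol n A (w k)) i) with (qvec n A (w k) i) in Hsg; fold q in Hq;
      rewrite Hsg in H2; fold q in H2; unfold Rabs in *; repeat destruct Rcase_abs; lra.
    + unfold B0_of in Nb. destruct (lt_dec i n); [|discriminate]. destruct (biactive n A u i); [|discriminate].
      destruct (excluded_middle_informative (forall j, (j < n)%nat -> M i j = 0)) as [H|]; [|discriminate].
      apply H; auto.
  - intros i Hi Ni j Hj. unfold N in Ni. apply orb_false_iff in Ni. destruct Ni as [Ns Nb].
    destruct (Hc i Hi) as [C1 C2].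
    assert (Hq1 : Rabs (q i) = 1).
    { unfold strongly_active in Ns. destruct (Rlt_dec (Rabs (qvec n A u i)) 1); [discriminate|].
      fold q in n0. rewrite <- Hqi in C1. lra. }
    destruct (Req_dec (y i) 0) as [Hy|Hy].
    +
      assert (Hbi : biactive n A u i = true).
      { unfold biactive. fold y. destruct (Req_EM_T (y i) 0); [|contradiction].
        fold q. destruct (Req_EM_T (Rabs (q i)) 1); [auto|contradiction]. }
      unfold B0_of in Nb. destruct (lt_dec i n); [|lia]. rewrite Hbi in Nb.
      destruct (excluded_middle_informative (forall j, (j < n)%nat -> M i j = 0)) as [|Hnz]; [discriminate|].
      apply not_all_ex_not in Hnz. destruct Hnz as [j0 Hj0].
      apply imply_to_and in Hj0. destruct Hj0 as [Hj0 Hm0].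
      apply (inf_often (fun k => mmul n A (J k) i j) (idm i j)); [|apply mmul_cv; intros; apply HM; auto].
      intros N0. apply NNPP. intros Hno.
      apply Hm0. apply (eventually (fun k => J k i j0) 0 (M i j0)); [|apply HM; auto].
      exists N0. intros k Hk. apply NNPP. intros Hk0. apply Hno. exists k. split; auto.
      destruct (HD k i Hi) as [[_ [_ H3]]|[_ H3]]. exfalso. apply Hk0. apply H3; auto. apply H3; auto.
    + apply (eventually (fun k => mmul n A (J k) i j) (idm i j)); [|apply mmul_cv; intros; apply HM; auto].
      destruct (cont_at n A u w hA Hw (Rabs (y i))) as [N0 HN0]. apply Rabs_pos_lt; auto.
      exists N0. intros k Hk. destruct (HN0 k Hk i Hi) as [H1 _].
      destruct (HD k i Hi) as [[H3 _]|[_ H3]]; [|apply H3; auto].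
      exfalso. rewrite H3 in H1. fold y in H1. rewrite Rminus_0_l, Rabs_Ropp in H1. lra.
Qed.

Lemma dir2 n A u M (B0 : nat -> bool) : spd n A ->
  (forall i, B0 i = true -> (i < n)%nat /\ biactive n A u i = true) ->
  meq n M (mmul n (minv n (A_of A (fun i => orb (strongly_active n A u i) (B0 i))))
                  (chi (fun i => orb (strongly_active n A u i) (B0 i)))) ->
  bouligand n A u M.
Proof.
  intros hA HB0 HMe.
  set (N := fun i => orb (strongly_active n A u i) (B0 i)) in *.
  set (X := minv n (A_of A N)) in *.
  set (Jm := mmul n X (chi N)) in *.
  destruct (minv_spec n (A_of A N) (A_of_spd n A N hA)) as [HX1 _]. fold X in HX1.
  assert (F1 : forall i k, (i < n)%nat -> (k < n)%nat -> N i = true -> X i k = idm i k).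
  { intros i k Hi Hk Ni. rewrite <- (HX1 i k Hi Hk). unfold mmul.
    rewrite (rsum_ext n _ (fun l => idm i l * X l k)).
    change (rsum n (fun l => idm i l * X l k)) with (mmul n idm X i k). rewrite mmul_idm_l; auto.
    intros l Hl. rewrite (AN_row_in A N i l Ni). auto. }
  assert (F2 : forall i j, (i < n)%nat -> (j < n)%nat -> N i = true -> Jm i j = 0).
  { intros i j Hi Hj Ni. unfold Jm, mmul. rewrite (rsum_ext n _ (fun k => idm i k * chi N k j)).
    change (rsum n (fun k => idm i k * chi N k j)) with (mmul n idm (chi N) i j). rewrite mmul_idm_l by auto.
    unfold chi. rewrite Ni. destruct (Nat.eqb i j); auto.
    intros k Hk. rewrite F1; auto. }
  assert (F3 : forall i j, (i < n)%nat -> (j < n)%nat -> N i = false -> mmul n A Jm i j = idm i j).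
  { intros i j Hi Hj Ni. rewrite <- (AN_row_out A N n Jm i j Hi Ni).
    2:{ intros k Hk Nk. apply F2; auto. }
    unfold Jm. rewrite <- mmul_assoc. unfold mmul at 1.
    rewrite (rsum_ext n _ (fun k => idm i k * chi N k j)).
    change (rsum n (fun k => idm i k * chi N k j)) with (mmul n idm (chi N) i j). rewrite mmul_idm_l by auto.
    unfold chi, idm. rewrite Ni. auto.
    intros k Hk. rewrite HX1; auto. }
  set (y := Ssol n A u). set (q := qvec n A u).
  assert (Hc : charac n A u y) by (apply Ssol_charac; auto).
  assert (Hqi : forall i, q i = u i - mv n A y i) by auto.
  assert (Hbi : forall i, (i < n)%nat -> biactive n A u i = true -> y i = 0 /\ Rabs (q i) = 1).
  { intros i Hi Hb. unfold biactive in Hb. fold y q in Hb.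
    destruct (Req_EM_T (y i) 0); [|discriminate]. destruct (Req_EM_T (Rabs (q i)) 1); [|discriminate]. auto. }
  assert (Hbi2 : forall i, (i < n)%nat -> y i = 0 -> Rabs (q i) = 1 -> biactive n A u i = true).
  { intros i Hi H1 H2. unfold biactive. fold y q.
    destruct (Req_EM_T (y i) 0); [|contradiction]. destruct (Req_EM_T (Rabs (q i)) 1); [auto|contradiction]. }
  assert (Hsa : forall i, strongly_active n A u i = true <-> Rabs (q i) < 1).
  { intros i. unfold strongly_active. fold q. destruct (Rlt_dec (Rabs (q i)) 1); split; auto; try discriminate; lra. }
  set (yv := fun (t : R) i => if B0 i then 0 else if biactive n A u i then t * q i else y i).
  set (qv := fun (t : R) i => if B0 i then (1 - t / 2) * q i else q i).
  set (wv := fun (t : R) i => mv n A (yv t) i + qv t i).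
  assert (Hwq : forall t i, wv t i - mv n A (yv t) i = qv t i) by (intros; unfold wv; ring).
  assert (Hcv : forall t, 0 < t <= 1 -> charac n A (wv t) (yv t)).
  { intros t Ht i Hi. rewrite Hwq. destruct (Hc i Hi) as [C1 C2]. rewrite <- Hqi in C1, C2.
    unfold yv, qv. destruct (B0 i) eqn:Bi.
    - destruct (Hbi i Hi (proj2 (HB0 i Bi))) as [_ Hq1]. rewrite Rabs_mult, Hq1, Rabs_R0.
      rewrite Rabs_right by lra. split; lra.
    - destruct (biactive n A u i) eqn:Hb.
      + destruct (Hbi i Hi Hb) as [_ Hq1].
        assert (q i * q i = 1) by (unfold Rabs in Hq1; destruct Rcase_abs in Hq1; nra).
        rewrite Rabs_mult, Hq1, (Rabs_right t) by lra. split; [lra|]. replace (t * q i * q i) with (t * (q i * q i)) by ring. rewrite H. ring.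
      + split; auto. }
  assert (Hsol : forall t, 0 < t <= 1 -> forall i, (i < n)%nat -> Ssol n A (wv t) i = yv t i).
  { intros t Ht. apply Ssol_eq; auto. }
  assert (HNin : forall t, 0 < t <= 1 -> forall i, (i < n)%nat -> N i = true -> yv t i = 0 /\ Rabs (qv t i) < 1).
  { intros t Ht i Hi Ni. unfold N in Ni. unfold yv, qv. destruct (B0 i) eqn:Bi.
    - destruct (Hbi i Hi (proj2 (HB0 i Bi))) as [_ Hq1]. split; auto. rewrite Rabs_mult, Hq1.
      rewrite Rabs_right by lra. lra.
    - rewrite orb_false_r in Ni. apply Hsa in Ni.
      destruct (biactive n A u i) eqn:Hb. destruct (Hbi i Hi Hb). lra.
      split; auto. destruct (Hc i Hi) as [C1 C2]. rewrite <- Hqi in C1, C2.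
      apply (charac_small _ _ C1 C2 Ni). }
  assert (HNout : forall t, 0 < t <= 1 -> forall i, (i < n)%nat -> N i = false ->
      yv t i <> 0 /\ Rabs (qv t i) <= 1 /\ yv t i * qv t i = Rabs (yv t i)).
  { intros t Ht i Hi Ni. pose proof (Hcv t Ht i Hi) as [C1 C2]. rewrite Hwq in C1, C2.
    split; [|split; auto].
    unfold N in Ni. apply orb_false_iff in Ni. destruct Ni as [Ns Nb].
    assert (Hq1 : ~ Rabs (q i) < 1) by (intros H; apply Hsa in H; congruence).
    unfold yv. rewrite Nb. destruct (biactive n A u i) eqn:Hb.
    - destruct (Hbi i Hi Hb) as [_ Hq]. intros H. apply Rmult_integral in H. destruct H as [H|H]. lra.
      rewrite H, Rabs_R0 in Hq. lra.
    - intros Hy. destruct (Hc i Hi) as [C3 _]. rewrite <- Hqi in C3.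
      assert (Rabs (q i) = 1) by lra. rewrite (Hbi2 i Hi Hy H) in Hb. discriminate. }
  destruct (finite_max n (fun i => 1 + rsum n (fun j => Rabs (Jm i j)) + rsum n (fun j => Rabs (mmul n A Jm i j))))
    as [C [HC HC2]].
  assert (Hder : forall t, 0 < t <= 1 -> has_deriv n (Ssol n A) (wv t) M).
  { intros t Ht.
    destruct (finite_min n (fun i => if N i then 1 - Rabs (qv t i) else Rabs (yv t i))) as [m [Hm Hm2]].
    { intros i Hi. destruct (N i) eqn:Ni.
      - destruct (HNin t Ht i Hi Ni). lra.
      - destruct (HNout t Ht i Hi Ni) as [H _]. apply Rabs_pos_lt; auto. }
    intros e He. exists (m / C). split. apply Rdiv_lt_0_compat; auto.
    intros h Hh.
    assert (HCh : C * norm1 n h < m).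
    { apply Rmult_lt_reg_l with (/ C). apply Rinv_0_lt_compat; auto.
      replace (/ C * (C * norm1 n h)) with (norm1 n h) by (field; lra).
      replace (/ C * m) with (m / C) by (unfold Rdiv; ring). auto. }
    pose proof (norm1_nonneg n h) as Hh0.
    set (y' := vadd (yv t) (mv n Jm h)).
    assert (Hq' : forall i, vadd (wv t) h i - mv n A y' i = qv t i + h i - mv n (mmul n A Jm) h i).
    { intros i. unfold y'. rewrite mv_plus, mv_mv. unfold vadd. rewrite <- (Hwq t i). ring. }
    assert (Hbd : forall i, (i < n)%nat -> Rabs (mv n Jm h i) < m /\ Rabs (h i) + Rabs (mv n (mmul n A Jm) h i) < m).
    { intros i Hi. pose proof (HC2 i Hi) as HCi.
      pose proof (mv_bound n Jm h i). pose proof (mv_bound n (mmul n A Jm) h i).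
      pose proof (coord_le_norm1 n h i Hi).
      assert (0 <= rsum n (fun j => Rabs (Jm i j))) by (apply rsum_nonneg; intros; apply Rabs_pos).
      assert (0 <= rsum n (fun j => Rabs (mmul n A Jm i j))) by (apply rsum_nonneg; intros; apply Rabs_pos).
      assert ((1 + rsum n (fun j => Rabs (Jm i j)) + rsum n (fun j => Rabs (mmul n A Jm i j))) * norm1 n h <= C * norm1 n h)
        by (apply Rmult_le_compat_r; auto).
      split; nra. }
    assert (Hc' : charac n A (vadd (wv t) h) y').
    { intros i Hi. rewrite Hq'. pose proof (Hm2 i Hi) as Hmi. destruct (Hbd i Hi) as [Hb1 Hb2].
      destruct (N i) eqn:Ni.
      - destruct (HNin t Ht i Hi Ni) as [Hy0 Hq0].
        assert (Hy' : y' i = 0).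
        { unfold y', vadd. rewrite Hy0. unfold mv. rewrite rsum_zero. ring. intros j Hj. rewrite F2; auto. ring. }
        rewrite Hy', Rabs_R0. split; [|ring].
        pose proof (Rabs_triang (qv t i + h i) (- mv n (mmul n A Jm) h i)).
        pose proof (Rabs_triang (qv t i) (h i)). rewrite Rabs_Ropp in H. unfold Rminus. lra.
      - destruct (HNout t Ht i Hi Ni) as [Hy0 [Hq0 Hyq]].
        assert (Eh : mv n (mmul n A Jm) h i = h i).
        { unfold mv. rewrite (rsum_ext n _ (fun j => if Nat.eqb j i then h j else 0)).
          apply (rsum_delta n h i Hi).
          intros j Hj. rewrite F3 by auto. unfold idm. rewrite Nat.eqb_sym. destruct (Nat.eqb j i); ring. }
        rewrite Eh. replace (qv t i + h i - h i) with (qv t i) by ring. split; auto.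
        unfold y', vadd.
        destruct (charac_sign _ _ Hyq Hq0 Hy0) as [[Ha Hb]|[Ha Hb]]; rewrite Hb;
        unfold Rabs in *; repeat destruct Rcase_abs; lra. }
    assert (Hs1 : forall i, (i < n)%nat -> Ssol n A (vadd (wv t) h) i = y' i) by (apply Ssol_eq; auto).
    assert (E0 : norm1 n (vsub (vsub (Ssol n A (vadd (wv t) h)) (Ssol n A (wv t))) (mv n M h)) = 0).
    { unfold norm1. apply rsum_zero. intros i Hi. unfold vsub. rewrite Hs1, Hsol by auto.
      unfold y', vadd.
      assert (mv n M h i = mv n Jm h i) by (unfold mv; apply rsum_ext; intros; rewrite HMe; auto).
      rewrite H. replace (yv t i + mv n Jm h i - yv t i - mv n Jm h i) with 0 by ring. apply Rabs_R0. }
    rewrite E0. apply Rmult_le_pos; lra. }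
  set (tk := fun k : nat => / (INR k + 1)).
  assert (Htk : forall k, 0 < tk k <= 1).
  { intros k. unfold tk. pose proof (pos_INR k). split. apply Rinv_0_lt_compat; lra.
    rewrite <- Rinv_1. apply Rinv_le_contravar; lra. }
  exists (fun k => wv (tk k)), (fun _ => M). split; [|split].
  - destruct (rowsum_bound n A) as [Ra [HRa0 HRa]].
    set (D := Ra * INR n + 1).
    assert (HD0 : 0 < D) by (unfold D; pose proof (pos_INR n); nra).
    assert (Hbd : forall t, 0 < t <= 1 -> norm1 n (vsub (wv t) u) <= INR n * (D * t)).
    { intros t Ht. apply norm1_bound. intros i Hi.
      assert (Hyd : forall j, (j < n)%nat -> Rabs (vsub (yv t) y j) <= t).
      { intros j Hj. unfold vsub, yv. destruct (B0 j) eqn:Bj.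
        - destruct (Hbi j Hj (proj2 (HB0 j Bj))) as [Hy0 _]. rewrite Hy0. rewrite Rminus_0_r, Rabs_R0. lra.
        - destruct (biactive n A u j) eqn:Hb.
          + destruct (Hbi j Hj Hb) as [Hy0 Hq1]. rewrite Hy0, Rminus_0_r, Rabs_mult, Hq1, Rabs_right; lra.
          + rewrite Rminus_diag, Rabs_R0. lra. }
      assert (E : vsub (wv t) u i = mv n A (vsub (yv t) y) i + (qv t i - q i)).
      { rewrite mv_minus. unfold vsub, wv. rewrite Hqi. ring. }
      rewrite E. eapply Rle_trans. apply Rabs_triang.
      pose proof (mv_bound n A (vsub (yv t) y) i).
      assert (norm1 n (vsub (yv t) y) <= INR n * t) by (apply norm1_bound; auto).
      assert (Rabs (qv t i - q i) <= t).
      { unfold qv. destruct (B0 i) eqn:Bi.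
        - destruct (Hbi i Hi (proj2 (HB0 i Bi))) as [_ Hq1].
          replace ((1 - t / 2) * q i - q i) with (- (t / 2) * q i) by ring.
          rewrite Rabs_mult, Hq1, Rabs_Ropp, Rabs_right; lra.
        - rewrite Rminus_diag, Rabs_R0. lra. }
      pose proof (HRa i Hi). pose proof (norm1_nonneg n (vsub (yv t) y)).
      assert (0 <= rsum n (fun j => Rabs (A i j))) by (apply rsum_nonneg; intros; apply Rabs_pos).
      assert (rsum n (fun j => Rabs (A i j)) * norm1 n (vsub (yv t) y) <= Ra * (INR n * t)) by (apply Rmult_le_compat; auto).
      unfold D. nra. }
    intros eps Heps.
    destruct (INR_archimed eps (INR n * D)) as [N0 HN0]; auto.
    exists N0. intros k Hk. eapply Rle_lt_trans. apply Hbd; auto.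
    pose proof (Htk k) as [Ht1 Ht2].
    assert (INR N0 <= INR k) by (apply le_INR; lia).
    unfold tk. apply Rmult_lt_reg_r with (INR k + 1). pose proof (pos_INR k). lra.
    replace (INR n * (D * / (INR k + 1)) * (INR k + 1)) with (INR n * D) by (field; pose proof (pos_INR k); lra).
    nra.
  - intros k. apply Hder. auto.
  - intros i j Hi Hj. apply Un_cv_const.
Qed.

Theorem theorem4p1 (n : nat) (A : mat) (u : vec) (hA : spd n A) :
  forall M : mat,
    bouligand n A u M <->
    exists B0 : nat -> bool,
      (forall i, B0 i = true -> (i < n)%nat /\ biactive n A u i = true) /\
      let N := fun i => orb (strongly_active n A u i) (B0 i) in
      meq n M (mmul n (minv n (A_of A N)) (chi N)).
Proof.
  intros M. split.
  - intros H. apply dir1; auto.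
  - intros [B0 [HB0 HM]]. apply (dir2 n A u M B0); auto.
Qed.
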